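(* Let $\psi:\Sigma\to\mathbb{H}^2\times\mathbb{R}\subset\mathbb{L}^4$ be a conformal immersion with regular vertical projection and constant mean curvature $1/2$ with respect to its canonical orientation, with induced metric $\lambda|dz|^2$, angle function $u>0$, unit normal $\eta$, vertical projection $N$, hyperbolic Gauss map $G$, and Abresch–Rosenberg differential $Q\,dz^2$ with $Q$ nowhere zero. Then $$\psi^\sharp=-\psi+\frac2u(G,1)=-\psi+\frac{2}{u^2}(\eta+N)$$ is a conformal immersion $\Sigma\to\mathbb{H}^2\times\mathbb{R}$ with regular vertical projection and constant mean curvature $1/2$ with respect to its canonical orientation; its hyperbolic Gauss map is $G$, its angle function is $u$, and its metric is $\lambda^\sharp|dz|^2$ with $\lambda^\sharp=\frac{16|Q|^2}{\lambda u^4}$.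
   Context: $\mathbb{L}^4=(\mathbb{R}^4,\langle,\rangle=-dx_0^2+dx_1^2+dx_2^2+dx_3^2)$, $\mathbb{H}^2=\{x\in\mathbb{L}^3:\langle x,x\rangle=-1,x_0>0\}$ in the first three coordinates, $\mathbb{H}^2\times\mathbb{R}\subset\mathbb{L}^4$; linear operations are in $\mathbb{L}^4$. For $\psi=(N,h)$: $\eta=(\hat N,u)$ is the unit normal tangent to $\mathbb{H}^2\times\mathbb{R}$, $u$ the angle function; regular vertical projection means $u\ne0$, canonical orientation $u>0$; hyperbolic Gauss map $G$ by $(G,1)=(\eta+N)/u$; $p=-\langle\psi_z,\eta_z\rangle$, $H$ mean curvature, Abresch–Rosenberg differential $Q=2Hp+h_z^2$. *)

(* Defs.v *)
From Stdlib Require Import Reals.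
From Coquelicot Require Import Coquelicot.
Open Scope R_scope.

Record L4 := mk4 { c0 : R; c1 : R; c2 : R; c3 : R }.

Definition lor (a b : L4) : R :=
  - c0 a * c0 b + c1 a * c1 b + c2 a * c2 b + c3 a * c3 b.

Definition add4 (a b : L4) : L4 :=
  mk4 (c0 a + c0 b) (c1 a + c1 b) (c2 a + c2 b) (c3 a + c3 b).
Definition scal4 (k : R) (a : L4) : L4 :=
  mk4 (k * c0 a) (k * c1 a) (k * c2 a) (k * c3 a).
Definition opp4 (a : L4) : L4 := scal4 (-1) a.

(* H^2 x R : first three coordinates in the hyperboloid model of H^2 *)
Definition in_H2xR (a : L4) : Prop :=
  - c0 a ^ 2 + c1 a ^ 2 + c2 a ^ 2 = -1 /\ 0 < c0 a.

(* vertical projection N of a point, viewed in L^4 as (N,0) *)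
Definition vproj (a : L4) : L4 := mk4 (c0 a) (c1 a) (c2 a) 0.

Definition sdom := R -> R -> Prop.
Definition open_dom (U : sdom) : Prop := open (fun p : R * R => U (fst p) (snd p)).

Definition Dx (f : R -> R -> R) : R -> R -> R := fun x y => Derive (fun t => f t y) x.
Definition Dy (f : R -> R -> R) : R -> R -> R := fun x y => Derive (fun t => f x t) y.

Definition C0 (U : sdom) (f : R -> R -> R) : Prop :=
  forall x y, U x y -> continuous (fun p : R * R => f (fst p) (snd p)) (x, y).

Fixpoint Ck (k : nat) (U : sdom) (f : R -> R -> R) : Prop :=
  match k with
  | O => C0 U f
  | S k' => (forall x y, U x y -> ex_derive (fun t => f t y) x /\ ex_derive (fun t => f x t) y)
            /\ C0 U f /\ Ck k' U (Dx f) /\ Ck k' U (Dy f)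
  end.

Definition smooth (U : sdom) (f : R -> R -> R) : Prop := forall k, Ck k U f.

Definition vmap := R -> R -> L4.
Definition comp0 (F : vmap) : R -> R -> R := fun x y => c0 (F x y).
Definition comp1 (F : vmap) : R -> R -> R := fun x y => c1 (F x y).
Definition comp2 (F : vmap) : R -> R -> R := fun x y => c2 (F x y).
Definition comp3 (F : vmap) : R -> R -> R := fun x y => c3 (F x y).

Definition smooth4 (U : sdom) (F : vmap) : Prop :=
  smooth U (comp0 F) /\ smooth U (comp1 F) /\ smooth U (comp2 F) /\ smooth U (comp3 F).

Definition Dx4 (F : vmap) : vmap := fun x y =>
  mk4 (Dx (comp0 F) x y) (Dx (comp1 F) x y) (Dx (comp2 F) x y) (Dx (comp3 F) x y).
Definition Dy4 (F : vmap) : vmap := fun x y =>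
  mk4 (Dy (comp0 F) x y) (Dy (comp1 F) x y) (Dy (comp2 F) x y) (Dy (comp3 F) x y).

(* conformal factor lambda: metric lambda |dz|^2 *)
Definition lam (psi : vmap) : R -> R -> R := fun x y => lor (Dx4 psi x y) (Dx4 psi x y).

Definition conformal_immersion (U : sdom) (psi : vmap) : Prop :=
  smooth4 U psi /\
  forall x y, U x y ->
    in_H2xR (psi x y) /\
    0 < lam psi x y /\
    lor (Dy4 psi x y) (Dy4 psi x y) = lam psi x y /\
    lor (Dx4 psi x y) (Dy4 psi x y) = 0.

(* eta is the (smooth) unit normal of psi tangent to H^2 x R, with angle
   function u = c3 eta; "canonical" = u > 0 (in particular u <> 0, i.e. regular
   vertical projection). *)
Definition unit_normal (U : sdom) (psi eta : vmap) : Prop :=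
  smooth4 U eta /\
  forall x y, U x y ->
    lor (eta x y) (eta x y) = 1 /\
    lor (eta x y) (vproj (psi x y)) = 0 /\
    lor (eta x y) (Dx4 psi x y) = 0 /\
    lor (eta x y) (Dy4 psi x y) = 0.

Definition angle (eta : vmap) : R -> R -> R := comp3 eta.

Definition canonical_normal (U : sdom) (psi eta : vmap) : Prop :=
  unit_normal U psi eta /\ forall x y, U x y -> 0 < angle eta x y.

(* mean curvature: psi_xx + psi_yy = 2 lambda H eta + (component along (N,0)) *)
Definition mean_curv (psi eta : vmap) : R -> R -> R := fun x y =>
  lor (add4 (Dx4 (Dx4 psi) x y) (Dy4 (Dy4 psi) x y)) (eta x y) / (2 * lam psi x y).

(* hyperbolic Gauss map, as the L^4 vector (G,1) = (eta + N)/u *)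
Definition hypGauss (psi eta : vmap) : vmap := fun x y =>
  scal4 (/ angle eta x y) (add4 (eta x y) (vproj (psi x y))).

Definition dz (f : R -> R -> R) (x y : R) : C := (Dx f x y / 2, - (Dy f x y / 2)).

Definition lor_z (psi eta : vmap) (x y : R) : C :=
  Cplus (Cplus (Cplus
    (Copp (Cmult (dz (comp0 psi) x y) (dz (comp0 eta) x y)))
    (Cmult (dz (comp1 psi) x y) (dz (comp1 eta) x y)))
    (Cmult (dz (comp2 psi) x y) (dz (comp2 eta) x y)))
    (Cmult (dz (comp3 psi) x y) (dz (comp3 eta) x y)).

Definition pdiff (psi eta : vmap) (x y : R) : C := Copp (lor_z psi eta x y).

Definition ARQ (psi eta : vmap) (x y : R) : C :=
  Cplus (Cmult (RtoC (2 * mean_curv psi eta x y)) (pdiff psi eta x y))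
        (Cmult (dz (comp3 psi) x y) (dz (comp3 psi) x y)).

Definition psi_sharp (psi eta : vmap) : vmap := fun x y =>
  add4 (opp4 (psi x y))
       (scal4 (2 / (angle eta x y) ^ 2) (add4 (eta x y) (vproj (psi x y)))).

Definition lam_sharp (psi eta : vmap) (x y : R) : R :=
  16 * (Cmod (ARQ psi eta x y)) ^ 2 / (lam psi x y * (angle eta x y) ^ 4).

(* Main.v *)
Require Import Defs.
From Stdlib Require Import Reals.
From Coquelicot Require Import Coquelicot.
Open Scope R_scope.
From Stdlib Require Import Lra.
Import Defs.


Lemma open_loc U x y : open_dom U -> U x y ->
  exists d : posreal, forall u v, Rabs (u - x) < d -> Rabs (v - y) < d -> U u v.
Proof.
  intros HU Hxy. destruct (HU (x, y) Hxy) as [e He].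
  exists e. intros u v Hu Hv. apply (He (u, v)). split; simpl; assumption.
Qed.

Lemma loc_pair U x y : open_dom U -> U x y -> locally (x, y) (fun p : R * R => U (fst p) (snd p)).
Proof. intros HU H. exact (HU (x, y) H). Qed.

Lemma loc_x U x y : open_dom U -> U x y -> locally x (fun t => U t y).
Proof.
  intros HU H. destruct (open_loc U x y HU H) as [d Hd]. exists d. intros t Ht.
  apply Hd. exact Ht. rewrite Rminus_eq_0, Rabs_R0. apply cond_pos.
Qed.

Lemma loc_y U x y : open_dom U -> U x y -> locally y (fun t => U x t).
Proof.
  intros HU H. destruct (open_loc U x y HU H) as [d Hd]. exists d. intros t Ht.
  apply Hd. rewrite Rminus_eq_0, Rabs_R0. apply cond_pos. exact Ht.
Qed.

Lemma C0_iff U f : C0 U f <-> forall x y, U x y -> continuity_2d_pt f x y.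
Proof.
  split; intros H x y Hxy; specialize (H x y Hxy); apply continuity_2d_pt_filterlim; exact H.
Qed.

Lemma C0_pt U f x y : C0 U f -> U x y -> continuity_2d_pt f x y.
Proof. intros H Hxy. exact (proj1 (C0_iff U f) H x y Hxy). Qed.
Lemma C0_of U f : (forall x y, U x y -> continuity_2d_pt f x y) -> C0 U f.
Proof. intros H. exact (proj2 (C0_iff U f) H). Qed.

Lemma Ck_S_le k : forall U f, Ck (S k) U f -> Ck k U f.
Proof.
  induction k as [|k IH]; intros U f H.
  - destruct H as [_ [H _]]. exact H.
  - destruct H as [H1 [H2 [H3 H4]]]. split; [exact H1|]. split; [exact H2|].
    split; apply IH; assumption.
Qed.

Lemma Ck_Dx k U f : Ck (S k) U f -> Ck k U (Dx f).
Proof. intros H; apply H. Qed.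
Lemma Ck_Dy k U f : Ck (S k) U f -> Ck k U (Dy f).
Proof. intros H; apply H. Qed.

Lemma Ck_C0 k U f : Ck k U f -> C0 U f.
Proof. destruct k; simpl; [auto| tauto]. Qed.

Lemma Ck_ext U : open_dom U -> forall k f g, (forall x y, U x y -> f x y = g x y) -> Ck k U f -> Ck k U g.
Proof.
  intros HU. assert (HC0 : forall f g, (forall x y, U x y -> f x y = g x y) -> C0 U f -> C0 U g).
  { intros f g Hfg Hf x y Hxy. apply continuous_ext_loc with (g := fun p : R * R => f (fst p) (snd p)).
    - generalize (loc_pair U x y HU Hxy). apply filter_imp. intros p Hp. apply Hfg, Hp.
    - exact (Hf x y Hxy). }
  induction k as [|k IH]; intros f g Hfg H.
  - exact (HC0 f g Hfg H).
  - destruct H as [H1 [H2 [H3 H4]]]. split; [|split; [|split]].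
    + intros x y Hxy. destruct (H1 x y Hxy) as [Ha Hb]. split.
      * apply ex_derive_ext_loc with (f := fun t => f t y); [|exact Ha].
        generalize (loc_x U x y HU Hxy). apply filter_imp. intros t Ht. apply Hfg, Ht.
      * apply ex_derive_ext_loc with (f := fun t => f x t); [|exact Hb].
        generalize (loc_y U x y HU Hxy). apply filter_imp. intros t Ht. apply Hfg, Ht.
    + exact (HC0 f g Hfg H2).
    + apply (IH (Dx f)); [|exact H3]. intros x y Hxy. unfold Dx. apply Derive_ext_loc.
      generalize (loc_x U x y HU Hxy). apply filter_imp. intros t Ht. apply Hfg, Ht.
    + apply (IH (Dy f)); [|exact H4]. intros x y Hxy. unfold Dy. apply Derive_ext_loc.
      generalize (loc_y U x y HU Hxy). apply filter_imp. intros t Ht. apply Hfg, Ht.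
Qed.

Definition fplus (f g : R -> R -> R) := fun x y => f x y + g x y.
Definition fmult (f g : R -> R -> R) := fun x y => f x y * g x y.
Definition fconst (c : R) : R -> R -> R := fun _ _ => c.
Definition finv (f : R -> R -> R) := fun x y => / f x y.


Section Clos.
Set Default Proof Using "All".
Variable U : sdom.
Hypothesis HU : open_dom U.

Lemma Ck_const k c : Ck k U (fconst c).
Proof.
  revert c. induction k as [|k IH]; intros c.
  - apply C0_of; intros; apply continuity_2d_pt_const.
  - split; [|split; [|split]].
    + intros; split; unfold fconst; apply ex_derive_const.
    + apply C0_of; intros; apply continuity_2d_pt_const.
    + apply (Ck_ext U HU k (fconst 0)); [|apply IH].
      intros x y _. unfold Dx, fconst. rewrite Derive_const. reflexivity.
    + apply (Ck_ext U HU k (fconst 0)); [|apply IH].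
      intros x y _. unfold Dy, fconst. rewrite Derive_const. reflexivity.
Qed.

Lemma exd_x k f x y : Ck (S k) U f -> U x y -> ex_derive (fun t => f t y) x.
Proof. intros H Hxy. destruct H as [H _]. apply (H x y Hxy). Qed.
Lemma exd_y k f x y : Ck (S k) U f -> U x y -> ex_derive (fun t => f x t) y.
Proof. intros H Hxy. destruct H as [H _]. apply (H x y Hxy). Qed.

Lemma Ck_plus k : forall f g, Ck k U f -> Ck k U g -> Ck k U (fplus f g).
Proof.
  induction k as [|k IH]; intros f g Hf Hg.
  - apply C0_of. intros x y Hxy. apply continuity_2d_pt_plus; eapply C0_pt; eassumption.
  - split; [|split; [|split]].
    + intros x y Hxy. split.
      * apply (ex_derive_plus (fun t => f t y) (fun t => g t y));
        [apply (exd_x k f x y Hf Hxy)|apply (exd_x k g x y Hg Hxy)].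
      * apply (ex_derive_plus (fun t => f x t) (fun t => g x t));
        [apply (exd_y k f x y Hf Hxy)|apply (exd_y k g x y Hg Hxy)].
    + apply C0_of. intros x y Hxy. apply continuity_2d_pt_plus; eapply C0_pt;
      [apply (Ck_C0 (S k) U f Hf) | |apply (Ck_C0 (S k) U g Hg)|]; assumption.
    + apply (Ck_ext U HU k (fplus (Dx f) (Dx g))).
      * intros x y Hxy. unfold Dx, fplus. rewrite Derive_plus; [reflexivity|apply (exd_x k f x y Hf Hxy)|apply (exd_x k g x y Hg Hxy)].
      * apply IH; [apply Ck_Dx, Hf|apply Ck_Dx, Hg].
    + apply (Ck_ext U HU k (fplus (Dy f) (Dy g))).
      * intros x y Hxy. unfold Dy, fplus. rewrite Derive_plus; [reflexivity|apply (exd_y k f x y Hf Hxy)|apply (exd_y k g x y Hg Hxy)].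
      * apply IH; [apply Ck_Dy, Hf|apply Ck_Dy, Hg].
Qed.

Lemma Ck_mult k : forall f g, Ck k U f -> Ck k U g -> Ck k U (fmult f g).
Proof.
  induction k as [|k IH]; intros f g Hf Hg.
  - apply C0_of. intros x y Hxy. apply continuity_2d_pt_mult; eapply C0_pt; eassumption.
  - split; [|split; [|split]].
    + intros x y Hxy. split.
      * apply (ex_derive_mult (fun t => f t y) (fun t => g t y));
        [apply (exd_x k f x y Hf Hxy)|apply (exd_x k g x y Hg Hxy)].
      * apply (ex_derive_mult (fun t => f x t) (fun t => g x t));
        [apply (exd_y k f x y Hf Hxy)|apply (exd_y k g x y Hg Hxy)].
    + apply C0_of. intros x y Hxy. apply continuity_2d_pt_mult; eapply C0_pt;
      [apply (Ck_C0 (S k) U f Hf) | |apply (Ck_C0 (S k) U g Hg)|]; assumption.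
    + apply (Ck_ext U HU k (fplus (fmult (Dx f) g) (fmult f (Dx g)))).
      * intros x y Hxy. unfold Dx, fplus, fmult. rewrite Derive_mult; [reflexivity|apply (exd_x k f x y Hf Hxy)|apply (exd_x k g x y Hg Hxy)].
      * apply Ck_plus; apply IH; [apply Ck_Dx, Hf|apply Ck_S_le, Hg|apply Ck_S_le, Hf|apply Ck_Dx, Hg].
    + apply (Ck_ext U HU k (fplus (fmult (Dy f) g) (fmult f (Dy g)))).
      * intros x y Hxy. unfold Dy, fplus, fmult. rewrite Derive_mult; [reflexivity|apply (exd_y k f x y Hf Hxy)|apply (exd_y k g x y Hg Hxy)].
      * apply Ck_plus; apply IH; [apply Ck_Dy, Hf|apply Ck_S_le, Hg|apply Ck_S_le, Hf|apply Ck_Dy, Hg].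
Qed.

Lemma Ck_inv k : forall f, Ck k U f -> (forall x y, U x y -> f x y <> 0) -> Ck k U (finv f).
Proof.
  induction k as [|k IH]; intros f Hf Hnz.
  - apply C0_of. intros x y Hxy. apply continuity_2d_pt_inv; [eapply C0_pt|]; eauto.
  - split; [|split; [|split]].
    + intros x y Hxy. split.
      * apply (ex_derive_inv (fun t => f t y)); [apply (exd_x k f x y Hf Hxy)|auto].
      * apply (ex_derive_inv (fun t => f x t)); [apply (exd_y k f x y Hf Hxy)|auto].
    + apply C0_of. intros x y Hxy. apply continuity_2d_pt_inv; [eapply C0_pt|]; eauto.
      apply (Ck_C0 (S k) U f Hf).
    + apply (Ck_ext U HU k (fmult (fconst (-1)) (fmult (Dx f) (fmult (finv f) (finv f))))).
      * intros x y Hxy. unfold Dx, fmult, finv, fconst. rewrite Derive_inv.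
        -- field. auto.
        -- apply (exd_x k f x y Hf Hxy).
        -- auto.
      * apply Ck_mult; [apply Ck_const|]. apply Ck_mult; [first [apply (Ck_Dx k U f Hf)|apply (Ck_Dy k U f Hf)]|].
        apply Ck_mult; apply IH; auto; apply Ck_S_le; auto.
    + apply (Ck_ext U HU k (fmult (fconst (-1)) (fmult (Dy f) (fmult (finv f) (finv f))))).
      * intros x y Hxy. unfold Dy, fmult, finv, fconst. rewrite Derive_inv.
        -- change (Derive (f x) y) with (Derive (fun t => f x t) y). field. auto.
        -- apply (exd_y k f x y Hf Hxy).
        -- auto.
      * apply Ck_mult; [apply Ck_const|]. apply Ck_mult; [first [apply (Ck_Dx k U f Hf)|apply (Ck_Dy k U f Hf)]|].
        apply Ck_mult; apply IH; auto; apply Ck_S_le; auto.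
Qed.

Lemma sm_const c : smooth U (fconst c).
Proof. intro k; apply Ck_const. Qed.
Lemma sm_plus f g : smooth U f -> smooth U g -> smooth U (fplus f g).
Proof. intros Hf Hg k; apply Ck_plus; auto. Qed.
Lemma sm_mult f g : smooth U f -> smooth U g -> smooth U (fmult f g).
Proof. intros Hf Hg k; apply Ck_mult; auto. Qed.
Lemma sm_inv f : smooth U f -> (forall x y, U x y -> f x y <> 0) -> smooth U (finv f).
Proof. intros Hf Hn k; apply Ck_inv; auto. Qed.
Lemma sm_ext f g : (forall x y, U x y -> f x y = g x y) -> smooth U f -> smooth U g.
Proof. intros H Hf k; apply (Ck_ext U HU k f); auto. Qed.
Lemma sm_Dx f : smooth U f -> smooth U (Dx f).
Proof. intros Hf k. apply (Hf (S k)). Qed.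
Lemma sm_Dy f : smooth U f -> smooth U (Dy f).
Proof. intros Hf k. apply (Hf (S k)). Qed.
Lemma sm_exdx f x y : smooth U f -> U x y -> ex_derive (fun t => f t y) x.
Proof. intros Hf H. apply (exd_x 0 f x y (Hf 1%nat) H). Qed.
Lemma sm_exdy f x y : smooth U f -> U x y -> ex_derive (fun t => f x t) y.
Proof. intros Hf H. apply (exd_y 0 f x y (Hf 1%nat) H). Qed.
Lemma sm_cont f x y : smooth U f -> U x y -> continuity_2d_pt f x y.
Proof. intros Hf H. apply (C0_pt U f). apply (Hf 0%nat). exact H. Qed.

Lemma sm_schwarz f x y : smooth U f -> U x y -> Dx (Dy f) x y = Dy (Dx f) x y.
Proof.
  intros Hf Hxy. unfold Dx, Dy. apply Schwarz.
  - destruct (open_loc U x y HU Hxy) as [d Hd]. exists d. intros u v Hu Hv.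
    specialize (Hd u v Hu Hv).
    split; [apply (sm_exdx f); auto|]. split; [apply (sm_exdy f); auto|].
    split; [apply (sm_exdx (Dy f)); auto; apply sm_Dy; auto|].
    apply (sm_exdy (Dx f)); auto; apply sm_Dx; auto.
  - apply (sm_cont (Dx (Dy f))); auto. apply sm_Dx, sm_Dy, Hf.
  - apply (sm_cont (Dy (Dx f))); auto. apply sm_Dy, sm_Dx, Hf.
Qed.

Lemma Dx_mult f g x y : smooth U f -> smooth U g -> U x y ->
  Dx (fun a b => f a b * g a b) x y = Dx f x y * g x y + f x y * Dx g x y.
Proof. intros Hf Hg H. unfold Dx. apply (Derive_mult (fun t => f t y) (fun t => g t y)); [apply (sm_exdx f)|apply (sm_exdx g)]; auto. Qed.
Lemma Dy_mult f g x y : smooth U f -> smooth U g -> U x y ->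
  Dy (fun a b => f a b * g a b) x y = Dy f x y * g x y + f x y * Dy g x y.
Proof. intros Hf Hg H. unfold Dy. apply (Derive_mult (fun t => f x t) (fun t => g x t)); [apply (sm_exdy f)|apply (sm_exdy g)]; auto. Qed.
Lemma Dx_plus f g x y : smooth U f -> smooth U g -> U x y ->
  Dx (fun a b => f a b + g a b) x y = Dx f x y + Dx g x y.
Proof. intros Hf Hg H. unfold Dx. apply (Derive_plus (fun t => f t y) (fun t => g t y)); [apply (sm_exdx f)|apply (sm_exdx g)]; auto. Qed.
Lemma Dy_plus f g x y : smooth U f -> smooth U g -> U x y ->
  Dy (fun a b => f a b + g a b) x y = Dy f x y + Dy g x y.
Proof. intros Hf Hg H. unfold Dy. apply (Derive_plus (fun t => f x t) (fun t => g x t)); [apply (sm_exdy f)|apply (sm_exdy g)]; auto. Qed.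
Lemma Dx_ext f g x y : (forall a b, U a b -> f a b = g a b) -> U x y -> Dx f x y = Dx g x y.
Proof. intros H Hxy. unfold Dx. apply Derive_ext_loc.
  generalize (loc_x U x y HU Hxy). apply filter_imp. intros t Ht. apply H, Ht. Qed.
Lemma Dy_ext f g x y : (forall a b, U a b -> f a b = g a b) -> U x y -> Dy f x y = Dy g x y.
Proof. intros H Hxy. unfold Dy. apply Derive_ext_loc.
  generalize (loc_y U x y HU Hxy). apply filter_imp. intros t Ht. apply H, Ht. Qed.
Lemma Dx_constU f c x y : (forall a b, U a b -> f a b = c) -> U x y -> Dx f x y = 0.
Proof. intros H Hxy. rewrite (Dx_ext f (fconst c)); auto. unfold Dx, fconst. apply Derive_const. Qed.
Lemma Dy_constU f c x y : (forall a b, U a b -> f a b = c) -> U x y -> Dy f x y = 0.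
Proof. intros H Hxy. rewrite (Dy_ext f (fconst c)); auto. unfold Dy, fconst. apply Derive_const. Qed.

End Clos.


Definition det3 a b c d e f g h i : R := a*(e*i - f*h) - b*(d*i - f*g) + c*(d*h - e*g).
Definition det4 (a00 a01 a02 a03 a10 a11 a12 a13 a20 a21 a22 a23 a30 a31 a32 a33 : R) : R :=
  a00 * det3 a11 a12 a13 a21 a22 a23 a31 a32 a33
 - a01 * det3 a10 a12 a13 a20 a22 a23 a30 a32 a33
 + a02 * det3 a10 a11 a13 a20 a21 a23 a30 a31 a33
 - a03 * det3 a10 a11 a12 a20 a21 a22 a30 a31 a32.
Definition detF (f1 f2 f3 f4 : L4) := det4 (c0 f1) (c1 f1) (c2 f1) (c3 f1) (c0 f2) (c1 f2) (c2 f2) (c3 f2)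
  (c0 f3) (c1 f3) (c2 f3) (c3 f3) (c0 f4) (c1 f4) (c2 f4) (c3 f4).
Lemma gram_det f1 f2 f3 f4 : det4 (lor f1 f1) (lor f1 f2) (lor f1 f3) (lor f1 f4)
  (lor f2 f1) (lor f2 f2) (lor f2 f3) (lor f2 f4)
  (lor f3 f1) (lor f3 f2) (lor f3 f3) (lor f3 f4)
  (lor f4 f1) (lor f4 f2) (lor f4 f3) (lor f4 f4) = - (detF f1 f2 f3 f4)^2.
Proof. destruct f1, f2, f3, f4. unfold detF, det4, det3, lor; simpl. ring. Qed.

Lemma complete f1 f2 f3 f4 w : detF f1 f2 f3 f4 <> 0 ->
  lor w f1 = 0 -> lor w f2 = 0 -> lor w f3 = 0 -> lor w f4 = 0 ->
  c0 w = 0 /\ c1 w = 0 /\ c2 w = 0 /\ c3 w = 0.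
Proof.
  intros Hd H1 H2 H3 H4.
  assert (E0 : detF f1 f2 f3 f4 * (- c0 w) =
    det4 (lor w f1) (c1 f1) (c2 f1) (c3 f1) (lor w f2) (c1 f2) (c2 f2) (c3 f2)
         (lor w f3) (c1 f3) (c2 f3) (c3 f3) (lor w f4) (c1 f4) (c2 f4) (c3 f4)).
  { destruct f1, f2, f3, f4, w. unfold detF, det4, det3, lor; simpl. ring. }
  assert (E1 : detF f1 f2 f3 f4 * (c1 w) =
    det4 (c0 f1) (lor w f1) (c2 f1) (c3 f1) (c0 f2) (lor w f2) (c2 f2) (c3 f2)
         (c0 f3) (lor w f3) (c2 f3) (c3 f3) (c0 f4) (lor w f4) (c2 f4) (c3 f4)).
  { destruct f1, f2, f3, f4, w. unfold detF, det4, det3, lor; simpl. ring. }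
  assert (E2 : detF f1 f2 f3 f4 * (c2 w) =
    det4 (c0 f1) (c1 f1) (lor w f1) (c3 f1) (c0 f2) (c1 f2) (lor w f2) (c3 f2)
         (c0 f3) (c1 f3) (lor w f3) (c3 f3) (c0 f4) (c1 f4) (lor w f4) (c3 f4)).
  { destruct f1, f2, f3, f4, w. unfold detF, det4, det3, lor; simpl. ring. }
  assert (E3 : detF f1 f2 f3 f4 * (c3 w) =
    det4 (c0 f1) (c1 f1) (c2 f1) (lor w f1) (c0 f2) (c1 f2) (c2 f2) (lor w f2)
         (c0 f3) (c1 f3) (c2 f3) (lor w f3) (c0 f4) (c1 f4) (c2 f4) (lor w f4)).
  { destruct f1, f2, f3, f4, w. unfold detF, det4, det3, lor; simpl. ring. }
  rewrite H1, H2, H3, H4 in E0, E1, E2, E3. unfold det4, det3 in E0, E1, E2, E3.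
  repeat split.
  - assert (detF f1 f2 f3 f4 * - c0 w = 0) by (rewrite E0; ring).
    apply Rmult_integral in H; destruct H; [contradiction|lra].
  - assert (detF f1 f2 f3 f4 * c1 w = 0) by (rewrite E1; ring).
    apply Rmult_integral in H; destruct H; [contradiction|lra].
  - assert (detF f1 f2 f3 f4 * c2 w = 0) by (rewrite E2; ring).
    apply Rmult_integral in H; destruct H; [contradiction|lra].
  - assert (detF f1 f2 f3 f4 * c3 w = 0) by (rewrite E3; ring).
    apply Rmult_integral in H; destruct H; [contradiction|lra].
Qed.

Lemma lor_sym a b : lor a b = lor b a.
Proof. unfold lor; ring. Qed.

Lemma parseval (f1 f2 f3 f4 a b : L4) (l : R) : l <> 0 ->
  lor f1 f1 = l -> lor f2 f2 = l -> lor f3 f3 = 1 -> lor f4 f4 = -1 ->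
  lor f1 f2 = 0 -> lor f1 f3 = 0 -> lor f1 f4 = 0 ->
  lor f2 f3 = 0 -> lor f2 f4 = 0 -> lor f3 f4 = 0 ->
  lor a b = lor a f1 * lor b f1 / l + lor a f2 * lor b f2 / l + lor a f3 * lor b f3 - lor a f4 * lor b f4.
Proof.
  intros Hl G11 G22 G33 G44 G12 G13 G14 G23 G24 G34.
  assert (Hd : detF f1 f2 f3 f4 <> 0).
  { intro H0. pose proof (gram_det f1 f2 f3 f4) as E.
    rewrite H0, G11, G22, G33, G44, G12, G13, G14, G23, G24, G34 in E.
    rewrite (lor_sym f2 f1), (lor_sym f3 f1), (lor_sym f4 f1), (lor_sym f3 f2), (lor_sym f4 f2), (lor_sym f4 f3) in E.
    rewrite G12, G13, G14, G23, G24, G34 in E. unfold det4, det3 in E.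
    apply Hl. nra. }
  set (k1 := lor a f1 / l). set (k2 := lor a f2 / l). set (k3 := lor a f3). set (k4 := - lor a f4).
  set (w := mk4 (c0 a - (k1 * c0 f1 + k2 * c0 f2 + k3 * c0 f3 + k4 * c0 f4))
                (c1 a - (k1 * c1 f1 + k2 * c1 f2 + k3 * c1 f3 + k4 * c1 f4))
                (c2 a - (k1 * c2 f1 + k2 * c2 f2 + k3 * c2 f3 + k4 * c2 f4))
                (c3 a - (k1 * c3 f1 + k2 * c3 f2 + k3 * c3 f3 + k4 * c3 f4))).
  assert (Hw : forall g, lor w g = lor a g - (k1 * lor f1 g + k2 * lor f2 g + k3 * lor f3 g + k4 * lor f4 g)).
  { intro g. unfold w, lor; simpl. ring. }
  destruct (complete f1 f2 f3 f4 w Hd) as [W0 [W1 [W2 W3]]].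
  - rewrite Hw, G11, (lor_sym f2 f1), G12, (lor_sym f3 f1), G13, (lor_sym f4 f1), G14.
    unfold k1; field; auto.
  - rewrite Hw, G12, G22, (lor_sym f3 f2), G23, (lor_sym f4 f2), G24.
    unfold k2; field; auto.
  - rewrite Hw, G13, G23, G33, (lor_sym f4 f3), G34. unfold k3; ring.
  - rewrite Hw, G14, G24, G34, G44. unfold k4; ring.
  - assert (Eb : lor a b = k1 * lor f1 b + k2 * lor f2 b + k3 * lor f3 b + k4 * lor f4 b).
    { assert (lor w b = 0). { unfold lor. rewrite W0, W1, W2, W3. ring. }
      rewrite Hw in H. lra. }
    rewrite Eb. unfold k1, k2, k3, k4.
    rewrite (lor_sym f1 b), (lor_sym f2 b), (lor_sym f3 b), (lor_sym f4 b). field. auto.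
Qed.


Lemma der_lor1 (f0 f1 f2 f3 g0 g1 g2 g3 : R -> R) x :
  ex_derive f0 x -> ex_derive f1 x -> ex_derive f2 x -> ex_derive f3 x ->
  ex_derive g0 x -> ex_derive g1 x -> ex_derive g2 x -> ex_derive g3 x ->
  Derive (fun t => - f0 t * g0 t + f1 t * g1 t + f2 t * g2 t + f3 t * g3 t) x =
  (- Derive f0 x * g0 x + Derive f1 x * g1 x + Derive f2 x * g2 x + Derive f3 x * g3 x)
  + (- f0 x * Derive g0 x + f1 x * Derive g1 x + f2 x * Derive g2 x + f3 x * Derive g3 x).
Proof.
  intros. apply is_derive_unique. auto_derive. tauto.
  change (fun x => f0 x) with f0. change (fun x => f1 x) with f1.
  change (fun x => f2 x) with f2. change (fun x => f3 x) with f3.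
  change (fun x => g0 x) with g0. change (fun x => g1 x) with g1.
  change (fun x => g2 x) with g2. change (fun x => g3 x) with g3. ring.
Qed.
Lemma der_A1 (u : R -> R) x : ex_derive u x -> u x <> 0 ->
  Derive (fun t => 2 / (u t)^2) x = -4 * Derive u x / (u x)^3.
Proof. intros. apply is_derive_unique. auto_derive. 
  - repeat split; auto.
  - change (fun x => u x) with u. field. auto. Qed.
Lemma der_A2 (u du : R -> R) x : ex_derive u x -> ex_derive du x -> u x <> 0 ->
  Derive (fun t => -4 * du t / (u t)^3) x = -4 * Derive du x / (u x)^3 + 12 * du x * Derive u x / (u x)^4.
Proof. intros. apply is_derive_unique. auto_derive; repeat split; auto.
  all: try (repeat apply Rmult_integral_contrapositive_currified; auto; lra).
  change (fun x => u x) with u. change (fun x => du x) with du. field. auto. Qed.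

Lemma L4eq a b : c0 a = c0 b -> c1 a = c1 b -> c2 a = c2 b -> c3 a = c3 b -> a = b.
Proof. destruct a, b; simpl; intros; subst; reflexivity. Qed.

Section Vec.
Set Default Proof Using "All".
Variable U : sdom.
Hypothesis HU : open_dom U.

Lemma sm4_add F G : smooth4 U F -> smooth4 U G -> smooth4 U (fun a b => add4 (F a b) (G a b)).
Proof. intros [? [? [? ?]]] [? [? [? ?]]].
  split; [|split; [|split]]; apply (sm_plus U HU); assumption. Qed.
Lemma sm4_scal s F : smooth U s -> smooth4 U F -> smooth4 U (fun a b => scal4 (s a b) (F a b)).
Proof. intros Hs [? [? [? ?]]].
  split; [|split; [|split]]; apply (sm_mult U HU); assumption. Qed.
Lemma sm4_vproj F : smooth4 U F -> smooth4 U (fun a b => vproj (F a b)).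
Proof. intros [? [? [? ?]]]. split; [|split; [|split]]; try assumption. apply (sm_const U HU 0). Qed.
Lemma sm4_Dx F : smooth4 U F -> smooth4 U (Dx4 F).
Proof. intros [? [? [? ?]]]. split; [|split; [|split]]; apply (sm_Dx U); assumption. Qed.
Lemma sm4_Dy F : smooth4 U F -> smooth4 U (Dy4 F).
Proof. intros [? [? [? ?]]]. split; [|split; [|split]]; apply (sm_Dy U); assumption. Qed.
Lemma sm4_ext F G : (forall a b, U a b -> F a b = G a b) -> smooth4 U F -> smooth4 U G.
Proof. intros E [H0 [H1 [H2 H3]]]. split; [|split; [|split]].
  - apply (sm_ext U HU (comp0 F)); auto. intros a b Hab; unfold comp0; rewrite E; auto.
  - apply (sm_ext U HU (comp1 F)); auto. intros a b Hab; unfold comp1; rewrite E; auto.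
  - apply (sm_ext U HU (comp2 F)); auto. intros a b Hab; unfold comp2; rewrite E; auto.
  - apply (sm_ext U HU (comp3 F)); auto. intros a b Hab; unfold comp3; rewrite E; auto. Qed.

Ltac dxlem L := first [apply (L U); assumption | idtac].

Lemma Dx4_add F G x y : smooth4 U F -> smooth4 U G -> U x y ->
  Dx4 (fun a b => add4 (F a b) (G a b)) x y = add4 (Dx4 F x y) (Dx4 G x y).
Proof. intros [? [? [? ?]]] [? [? [? ?]]] Hxy. apply L4eq; simpl;
  [apply (Dx_plus U HU (comp0 F) (comp0 G))|apply (Dx_plus U HU (comp1 F) (comp1 G))
  |apply (Dx_plus U HU (comp2 F) (comp2 G))|apply (Dx_plus U HU (comp3 F) (comp3 G))]; assumption. Qed.
Lemma Dy4_add F G x y : smooth4 U F -> smooth4 U G -> U x y ->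
  Dy4 (fun a b => add4 (F a b) (G a b)) x y = add4 (Dy4 F x y) (Dy4 G x y).
Proof. intros [? [? [? ?]]] [? [? [? ?]]] Hxy. apply L4eq; simpl;
  [apply (Dy_plus U HU (comp0 F) (comp0 G))|apply (Dy_plus U HU (comp1 F) (comp1 G))
  |apply (Dy_plus U HU (comp2 F) (comp2 G))|apply (Dy_plus U HU (comp3 F) (comp3 G))]; assumption. Qed.
Lemma Dx4_scal s F x y : smooth U s -> smooth4 U F -> U x y ->
  Dx4 (fun a b => scal4 (s a b) (F a b)) x y = add4 (scal4 (Dx s x y) (F x y)) (scal4 (s x y) (Dx4 F x y)).
Proof. intros Hs [? [? [? ?]]] Hxy. apply L4eq; simpl;
  [apply (Dx_mult U HU s (comp0 F))|apply (Dx_mult U HU s (comp1 F))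
  |apply (Dx_mult U HU s (comp2 F))|apply (Dx_mult U HU s (comp3 F))]; assumption. Qed.
Lemma Dy4_scal s F x y : smooth U s -> smooth4 U F -> U x y ->
  Dy4 (fun a b => scal4 (s a b) (F a b)) x y = add4 (scal4 (Dy s x y) (F x y)) (scal4 (s x y) (Dy4 F x y)).
Proof. intros Hs [? [? [? ?]]] Hxy. apply L4eq; simpl;
  [apply (Dy_mult U HU s (comp0 F))|apply (Dy_mult U HU s (comp1 F))
  |apply (Dy_mult U HU s (comp2 F))|apply (Dy_mult U HU s (comp3 F))]; assumption. Qed.
Lemma Dx4_vproj F x y : Dx4 (fun a b => vproj (F a b)) x y = vproj (Dx4 F x y).
Proof. apply L4eq; simpl; try reflexivity. unfold Dx, comp3; simpl. apply Derive_const. Qed.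
Lemma Dy4_vproj F x y : Dy4 (fun a b => vproj (F a b)) x y = vproj (Dy4 F x y).
Proof. apply L4eq; simpl; try reflexivity. unfold Dy, comp3; simpl. apply Derive_const. Qed.
Lemma Dx4_ext F G x y : (forall a b, U a b -> F a b = G a b) -> U x y -> Dx4 F x y = Dx4 G x y.
Proof. intros E H. apply L4eq; simpl; apply (Dx_ext U HU); auto;
  intros a b Hab; unfold comp0, comp1, comp2, comp3; rewrite E; auto. Qed.
Lemma Dy4_ext F G x y : (forall a b, U a b -> F a b = G a b) -> U x y -> Dy4 F x y = Dy4 G x y.
Proof. intros E H. apply L4eq; simpl; apply (Dy_ext U HU); auto;
  intros a b Hab; unfold comp0, comp1, comp2, comp3; rewrite E; auto. Qed.

Lemma Dx_lor F G x y : smooth4 U F -> smooth4 U G -> U x y ->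
  Dx (fun a b => lor (F a b) (G a b)) x y = lor (Dx4 F x y) (G x y) + lor (F x y) (Dx4 G x y).
Proof. intros [F0 [F1 [F2 F3]]] [G0 [G1 [G2 G3]]] H. unfold Dx, lor. simpl.
  apply (der_lor1 (fun t => c0 (F t y)) (fun t => c1 (F t y)) (fun t => c2 (F t y)) (fun t => c3 (F t y))
                  (fun t => c0 (G t y)) (fun t => c1 (G t y)) (fun t => c2 (G t y)) (fun t => c3 (G t y)));
  [apply (sm_exdx U HU (comp0 F))|apply (sm_exdx U HU (comp1 F))|apply (sm_exdx U HU (comp2 F))|apply (sm_exdx U HU (comp3 F))
  |apply (sm_exdx U HU (comp0 G))|apply (sm_exdx U HU (comp1 G))|apply (sm_exdx U HU (comp2 G))|apply (sm_exdx U HU (comp3 G))];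
  assumption. Qed.
Lemma Dy_lor F G x y : smooth4 U F -> smooth4 U G -> U x y ->
  Dy (fun a b => lor (F a b) (G a b)) x y = lor (Dy4 F x y) (G x y) + lor (F x y) (Dy4 G x y).
Proof. intros [F0 [F1 [F2 F3]]] [G0 [G1 [G2 G3]]] H. unfold Dy, lor. simpl.
  apply (der_lor1 (fun t => c0 (F x t)) (fun t => c1 (F x t)) (fun t => c2 (F x t)) (fun t => c3 (F x t))
                  (fun t => c0 (G x t)) (fun t => c1 (G x t)) (fun t => c2 (G x t)) (fun t => c3 (G x t)));
  [apply (sm_exdy U HU (comp0 F))|apply (sm_exdy U HU (comp1 F))|apply (sm_exdy U HU (comp2 F))|apply (sm_exdy U HU (comp3 F))
  |apply (sm_exdy U HU (comp0 G))|apply (sm_exdy U HU (comp1 G))|apply (sm_exdy U HU (comp2 G))|apply (sm_exdy U HU (comp3 G))];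
  assumption. Qed.

Lemma Dx_lor_const F G c x y : smooth4 U F -> smooth4 U G -> U x y ->
  (forall a b, U a b -> lor (F a b) (G a b) = c) ->
  lor (Dx4 F x y) (G x y) + lor (F x y) (Dx4 G x y) = 0.
Proof. intros HF HG H E. rewrite <- (Dx_lor F G x y HF HG H). apply (Dx_constU U HU _ c); auto. Qed.
Lemma Dy_lor_const F G c x y : smooth4 U F -> smooth4 U G -> U x y ->
  (forall a b, U a b -> lor (F a b) (G a b) = c) ->
  lor (Dy4 F x y) (G x y) + lor (F x y) (Dy4 G x y) = 0.
Proof. intros HF HG H E. rewrite <- (Dy_lor F G x y HF HG H). apply (Dy_constU U HU _ c); auto. Qed.

End Vec.

Section Gen.
Set Default Proof Using "All".
Variable U : sdom.
Hypothesis HU : open_dom U.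

Lemma Dx4_opp P x y : Dx4 (fun a b => opp4 (P a b)) x y = opp4 (Dx4 P x y).
Proof. apply L4eq; simpl; unfold Dx; apply Derive_scal. Qed.
Lemma Dy4_opp P x y : Dy4 (fun a b => opp4 (P a b)) x y = opp4 (Dy4 P x y).
Proof. apply L4eq; simpl; unfold Dy; apply Derive_scal. Qed.
Lemma sm4_opp P : smooth4 U P -> smooth4 U (fun a b => opp4 (P a b)).
Proof. intros H. apply (sm4_scal U HU (fconst (-1)) P); auto. apply (sm_const U HU). Qed.

Lemma D1x P E N s x y : smooth4 U P -> smooth4 U E -> smooth4 U N -> smooth U s -> U x y ->
  Dx4 (fun a b => add4 (opp4 (P a b)) (scal4 (s a b) (add4 (E a b) (N a b)))) x y =
  add4 (opp4 (Dx4 P x y)) (add4 (scal4 (Dx s x y) (add4 (E x y) (N x y))) (scal4 (s x y) (add4 (Dx4 E x y) (Dx4 N x y)))).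
Proof. intros HP HE HN Hs H.
  rewrite (Dx4_add U HU (fun a b => opp4 (P a b)) (fun a b => scal4 (s a b) (add4 (E a b) (N a b)))); auto.
  - rewrite Dx4_opp. rewrite (Dx4_scal U HU s (fun a b => add4 (E a b) (N a b))); auto.
    + rewrite (Dx4_add U HU E N); auto.
    + apply (sm4_add U HU); auto.
  - apply sm4_opp; auto.
  - apply (sm4_scal U HU); auto. apply (sm4_add U HU); auto.
Qed.
Lemma D1y P E N s x y : smooth4 U P -> smooth4 U E -> smooth4 U N -> smooth U s -> U x y ->
  Dy4 (fun a b => add4 (opp4 (P a b)) (scal4 (s a b) (add4 (E a b) (N a b)))) x y =
  add4 (opp4 (Dy4 P x y)) (add4 (scal4 (Dy s x y) (add4 (E x y) (N x y))) (scal4 (s x y) (add4 (Dy4 E x y) (Dy4 N x y)))).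
Proof. intros HP HE HN Hs H.
  rewrite (Dy4_add U HU (fun a b => opp4 (P a b)) (fun a b => scal4 (s a b) (add4 (E a b) (N a b)))); auto.
  - rewrite Dy4_opp. rewrite (Dy4_scal U HU s (fun a b => add4 (E a b) (N a b))); auto.
    + rewrite (Dy4_add U HU E N); auto.
    + apply (sm4_add U HU); auto.
  - apply sm4_opp; auto.
  - apply (sm4_scal U HU); auto. apply (sm4_add U HU); auto.
Qed.

Lemma D2x P E N s x y : smooth4 U P -> smooth4 U E -> smooth4 U N -> smooth U s -> U x y ->
  Dx4 (Dx4 (fun a b => add4 (opp4 (P a b)) (scal4 (s a b) (add4 (E a b) (N a b))))) x y =
  add4 (opp4 (Dx4 (Dx4 P) x y))
   (add4 (add4 (scal4 (Dx (Dx s) x y) (add4 (E x y) (N x y))) (scal4 (Dx s x y) (add4 (Dx4 E x y) (Dx4 N x y))))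
         (add4 (scal4 (Dx s x y) (add4 (Dx4 E x y) (Dx4 N x y))) (scal4 (s x y) (add4 (Dx4 (Dx4 E) x y) (Dx4 (Dx4 N) x y))))).
Proof. intros HP HE HN Hs H.
  rewrite (Dx4_ext U HU _ (fun a b => add4 (opp4 (Dx4 P a b)) (add4 (scal4 (Dx s a b) (add4 (E a b) (N a b)))
     (scal4 (s a b) (add4 (Dx4 E a b) (Dx4 N a b)))))); auto.
  2: { intros a b Hab. apply D1x; auto. }
  assert (SE := sm4_Dx U HU E HE). assert (SN := sm4_Dx U HU N HN). assert (SP := sm4_Dx U HU P HP).
  assert (Ss := sm_Dx U HU s Hs).
  rewrite (Dx4_add U HU (fun a b => opp4 (Dx4 P a b))); auto.
  2: apply sm4_opp; auto.
  2: { apply (sm4_add U HU); apply (sm4_scal U HU); auto; apply (sm4_add U HU); auto. }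
  rewrite Dx4_opp. f_equal.
  rewrite (Dx4_add U HU (fun a b => scal4 (Dx s a b) (add4 (E a b) (N a b)))); auto.
  2,3: apply (sm4_scal U HU); auto; apply (sm4_add U HU); auto.
  rewrite (Dx4_scal U HU (Dx s) (fun a b => add4 (E a b) (N a b))); auto.
  2: apply (sm4_add U HU); auto.
  rewrite (Dx4_scal U HU s (fun a b => add4 (Dx4 E a b) (Dx4 N a b))); auto.
  2: apply (sm4_add U HU); auto.
  rewrite (Dx4_add U HU E N); auto. rewrite (Dx4_add U HU (Dx4 E) (Dx4 N)); auto.
Qed.
Lemma D2y P E N s x y : smooth4 U P -> smooth4 U E -> smooth4 U N -> smooth U s -> U x y ->
  Dy4 (Dy4 (fun a b => add4 (opp4 (P a b)) (scal4 (s a b) (add4 (E a b) (N a b))))) x y =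
  add4 (opp4 (Dy4 (Dy4 P) x y))
   (add4 (add4 (scal4 (Dy (Dy s) x y) (add4 (E x y) (N x y))) (scal4 (Dy s x y) (add4 (Dy4 E x y) (Dy4 N x y))))
         (add4 (scal4 (Dy s x y) (add4 (Dy4 E x y) (Dy4 N x y))) (scal4 (s x y) (add4 (Dy4 (Dy4 E) x y) (Dy4 (Dy4 N) x y))))).
Proof. intros HP HE HN Hs H.
  rewrite (Dy4_ext U HU _ (fun a b => add4 (opp4 (Dy4 P a b)) (add4 (scal4 (Dy s a b) (add4 (E a b) (N a b)))
     (scal4 (s a b) (add4 (Dy4 E a b) (Dy4 N a b)))))); auto.
  2: { intros a b Hab. apply D1y; auto. }
  assert (SE := sm4_Dy U HU E HE). assert (SN := sm4_Dy U HU N HN). assert (SP := sm4_Dy U HU P HP).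
  assert (Ss := sm_Dy U HU s Hs).
  rewrite (Dy4_add U HU (fun a b => opp4 (Dy4 P a b))); auto.
  2: apply sm4_opp; auto.
  2: { apply (sm4_add U HU); apply (sm4_scal U HU); auto; apply (sm4_add U HU); auto. }
  rewrite Dy4_opp. f_equal.
  rewrite (Dy4_add U HU (fun a b => scal4 (Dy s a b) (add4 (E a b) (N a b)))); auto.
  2,3: apply (sm4_scal U HU); auto; apply (sm4_add U HU); auto.
  rewrite (Dy4_scal U HU (Dy s) (fun a b => add4 (E a b) (N a b))); auto.
  2: apply (sm4_add U HU); auto.
  rewrite (Dy4_scal U HU s (fun a b => add4 (Dy4 E a b) (Dy4 N a b))); auto.
  2: apply (sm4_add U HU); auto.
  rewrite (Dy4_add U HU E N); auto. rewrite (Dy4_add U HU (Dy4 E) (Dy4 N)); auto.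
Qed.

End Gen.


Lemma lor_add_l a b c : lor (add4 a b) c = lor a c + lor b c.
Proof. unfold lor, add4; simpl; ring. Qed.
Lemma lor_add_r a b c : lor c (add4 a b) = lor c a + lor c b.
Proof. unfold lor, add4; simpl; ring. Qed.
Lemma lor_scal_l k a c : lor (scal4 k a) c = k * lor a c.
Proof. unfold lor, scal4; simpl; ring. Qed.
Lemma lor_scal_r k a c : lor c (scal4 k a) = k * lor c a.
Proof. unfold lor, scal4; simpl; ring. Qed.
Lemma lor_vproj_l a c : lor (vproj a) c = lor a c - c3 a * c3 c.
Proof. unfold lor, vproj; simpl; ring. Qed.
Lemma lor_vproj_r a c : lor c (vproj a) = lor c a - c3 c * c3 a.
Proof. unfold lor, vproj; simpl; ring. Qed.
Lemma c3_add a b : c3 (add4 a b) = c3 a + c3 b. Proof. reflexivity. Qed.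
Lemma c3_scal k a : c3 (scal4 k a) = k * c3 a. Proof. reflexivity. Qed.
Lemma c3_vproj a : c3 (vproj a) = 0. Proof. reflexivity. Qed.
Lemma vproj_add a b : vproj (add4 a b) = add4 (vproj a) (vproj b).
Proof. apply L4eq; simpl; ring. Qed.
Lemma vproj_scal k a : vproj (scal4 k a) = scal4 k (vproj a).
Proof. apply L4eq; simpl; ring. Qed.
Lemma vproj_vproj a : vproj (vproj a) = vproj a.
Proof. apply L4eq; simpl; ring. Qed.

Create HintDb lorE.
#[export] Hint Rewrite lor_add_l lor_add_r lor_scal_l lor_scal_r lor_vproj_l lor_vproj_r
  c3_add c3_scal c3_vproj vproj_add vproj_scal vproj_vproj : lorE.

Definition E3 := mk4 0 0 0 1.
Lemma lor_E3 a : lor a E3 = c3 a. Proof. unfold lor, E3; simpl; ring. Qed.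

Definition Nf (psi : vmap) : vmap := fun a b => vproj (psi a b).

Definition Af (eta : vmap) : R -> R -> R := fun a b => 2 / (c3 (eta a b)) ^ 2.

Lemma psi_sharp_eq psi eta : psi_sharp psi eta =
  fun a b => add4 (opp4 (psi a b)) (scal4 (Af eta a b) (add4 (eta a b) (Nf psi a b))).
Proof. reflexivity. Qed.

Lemma lorz_fst F G x y : fst (lor_z F G x y) = (lor (Dx4 F x y) (Dx4 G x y) - lor (Dy4 F x y) (Dy4 G x y)) / 4.
Proof. unfold lor_z, dz, lor, Cplus, Cmult, Copp; simpl; field. Qed.
Lemma lorz_snd F G x y : snd (lor_z F G x y) = - (lor (Dx4 F x y) (Dy4 G x y) + lor (Dy4 F x y) (Dx4 G x y)) / 4.
Proof. unfold lor_z, dz, lor, Cplus, Cmult, Copp; simpl; field. Qed.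
Lemma ARQ_fst F G x y : fst (ARQ F G x y) =
  2 * mean_curv F G x y * (- fst (lor_z F G x y)) + (c3 (Dx4 F x y) * c3 (Dx4 F x y) - c3 (Dy4 F x y) * c3 (Dy4 F x y)) / 4.
Proof. unfold ARQ, pdiff, Cplus, Cmult, Copp, RtoC, dz; simpl. field. Qed.
Lemma ARQ_snd F G x y : snd (ARQ F G x y) =
  2 * mean_curv F G x y * (- snd (lor_z F G x y)) - (c3 (Dx4 F x y) * c3 (Dy4 F x y)) / 2.
Proof. unfold ARQ, pdiff, Cplus, Cmult, Copp, RtoC, dz; simpl. field. Qed.
Lemma Cmod2 (z : C) : Cmod z ^ 2 = fst z ^ 2 + snd z ^ 2.
Proof. unfold Cmod. rewrite pow2_sqrt; [reflexivity|]. nra. Qed.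

Lemma vproj_Nf psi a b : vproj (Nf psi a b) = Nf psi a b.
Proof. apply vproj_vproj. Qed.

Definition eta_s (psi eta : vmap) : vmap := fun a b =>
  add4 (eta a b) (add4 (Nf psi a b) (opp4 (vproj (psi_sharp psi eta a b)))).

Lemma pos_lemma N0 N1 N2 e0 e1 e2 u : 0 < N0 -> - N0^2 + N1^2 + N2^2 = -1 ->
  - N0 * e0 + N1 * e1 + N2 * e2 = 0 -> - e0^2 + e1^2 + e2^2 = 1 - u^2 -> 0 < u -> u^2 <= 1 ->
  0 < -1 * N0 + 2 / u^2 * (e0 + N0).
Proof.
  intros HN0 HN He Hee Hu Hu1.
  set (A := 2 / u^2).
  assert (HA : A * u^2 = 2) by (unfold A; field; lra).
  assert (HA2 : 2 <= A).
  { unfold A. apply (Rmult_le_reg_r (u^2)); [nra|]. unfold Rdiv. rewrite Rmult_assoc, Rinv_l; nra. }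
  assert (CS : (N1 * e1 + N2 * e2)^2 <= (N1^2 + N2^2) * (e1^2 + e2^2)).
  { assert (E : (N1^2 + N2^2) * (e1^2 + e2^2) - (N1 * e1 + N2 * e2)^2 = (N1 * e2 - N2 * e1)^2) by ring.
    pose proof (pow2_ge_0 (N1 * e2 - N2 * e1)). lra. }
  assert (Ke : e0^2 <= (N0^2 - 1) * (1 - u^2)).
  { assert (N1 * e1 + N2 * e2 = N0 * e0) by lra.
    assert (N1^2 + N2^2 = N0^2 - 1) by lra. assert (e1^2 + e2^2 = e0^2 + 1 - u^2) by lra.
    rewrite H, H0, H1 in CS. nra. }
  replace (-1 * N0 + A * (e0 + N0)) with ((A - 1) * N0 + A * e0) by ring.
  destruct (Rle_or_lt 0 e0) as [He0|He0]; [nra|].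
  assert (K2 : A^2 * e0^2 < (A - 1)^2 * N0^2).
  { assert (A^2 * e0^2 <= A^2 * ((N0^2 - 1) * (1 - u^2))) by (apply Rmult_le_compat_l; nra).
    assert (A^2 * ((N0^2 - 1) * (1 - u^2)) = (A^2 - 2 * A) * (N0^2 - 1)).
    { replace (A^2 * ((N0^2 - 1) * (1 - u^2))) with (A^2 * (N0^2 - 1) - A * (A * u^2) * (N0^2 - 1)) by ring.
      rewrite HA. ring. }
    nra. }
  assert (0 < (A - 1) * N0) by nra.
  nra.
Qed.

Section Geo.
Set Default Proof Using "All".
Variables (U : sdom) (psi eta : vmap).
Hypothesis HU : open_dom U.
Hypothesis Hc : conformal_immersion U psi.
Hypothesis Hn : canonical_normal U psi eta.
Hypothesis HH : forall x y, U x y -> mean_curv psi eta x y = 1 / 2.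
Hypothesis HQ : forall x y, U x y -> ARQ psi eta x y <> RtoC 0.

Lemma sm_psi : smooth4 U psi. Proof. apply Hc. Qed.
Lemma sm_eta : smooth4 U eta. Proof. apply Hn. Qed.
Lemma sm_N : smooth4 U (Nf psi). Proof. apply (sm4_vproj U HU), sm_psi. Qed.
Lemma sm_px : smooth4 U (Dx4 psi). Proof. apply (sm4_Dx U HU), sm_psi. Qed.
Lemma sm_py : smooth4 U (Dy4 psi). Proof. apply (sm4_Dy U HU), sm_psi. Qed.
Lemma sm_ex : smooth4 U (Dx4 eta). Proof. apply (sm4_Dx U HU), sm_eta. Qed.
Lemma sm_ey : smooth4 U (Dy4 eta). Proof. apply (sm4_Dy U HU), sm_eta. Qed.

Lemma u_pos x y : U x y -> 0 < c3 (eta x y).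
Proof. intros H. apply (proj2 Hn x y H). Qed.

Lemma lam_pos x y : U x y -> 0 < lam psi x y.
Proof. intros H. apply (proj2 Hc x y H). Qed.

Lemma f_pxpx x y : lor (Dx4 psi x y) (Dx4 psi x y) = lam psi x y.
Proof. reflexivity. Qed.
Lemma f_pypy x y : U x y -> lor (Dy4 psi x y) (Dy4 psi x y) = lam psi x y.
Proof. intros H. apply (proj2 Hc x y H). Qed.
Lemma f_pxpy x y : U x y -> lor (Dx4 psi x y) (Dy4 psi x y) = 0.
Proof. intros H. apply (proj2 Hc x y H). Qed.
Lemma f_ee x y : U x y -> lor (eta x y) (eta x y) = 1.
Proof. intros H. apply (proj2 (proj1 Hn) x y H). Qed.
Lemma f_eN x y : U x y -> lor (eta x y) (vproj (psi x y)) = 0.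
Proof. intros H. apply (proj2 (proj1 Hn) x y H). Qed.
Lemma f_epx x y : U x y -> lor (eta x y) (Dx4 psi x y) = 0.
Proof. intros H. apply (proj2 (proj1 Hn) x y H). Qed.
Lemma f_epy x y : U x y -> lor (eta x y) (Dy4 psi x y) = 0.
Proof. intros H. apply (proj2 (proj1 Hn) x y H). Qed.
Lemma f_NN x y : U x y -> lor (vproj (psi x y)) (vproj (psi x y)) = -1.
Proof. intros H. destruct (proj2 Hc x y H) as [[H1 _] _]. rewrite <- H1. unfold lor; simpl. ring. Qed.

Lemma f_Npx x y : U x y -> lor (vproj (psi x y)) (Dx4 psi x y) = 0.
Proof. intros H. pose proof (Dx_lor_const U HU (Nf psi) (Nf psi) (-1) x y sm_N sm_N H f_NN) as E.
  unfold Nf in E. rewrite (Dx4_vproj U HU) in E. unfold lor, vproj in *; simpl in *. lra. Qed.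
Lemma f_Npy x y : U x y -> lor (vproj (psi x y)) (Dy4 psi x y) = 0.
Proof. intros H. pose proof (Dy_lor_const U HU (Nf psi) (Nf psi) (-1) x y sm_N sm_N H f_NN) as E.
  unfold Nf in E. rewrite (Dy4_vproj U HU) in E. unfold lor, vproj in *; simpl in *. lra. Qed.

Lemma f_exe x y : U x y -> lor (Dx4 eta x y) (eta x y) = 0.
Proof. intros H. pose proof (Dx_lor_const U HU eta eta 1 x y sm_eta sm_eta H f_ee) as E.
  rewrite (lor_sym (eta x y)) in E. lra. Qed.
Lemma f_eye x y : U x y -> lor (Dy4 eta x y) (eta x y) = 0.
Proof. intros H. pose proof (Dy_lor_const U HU eta eta 1 x y sm_eta sm_eta H f_ee) as E.
  rewrite (lor_sym (eta x y)) in E. lra. Qed.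

Lemma f_expx x y : U x y -> lor (Dx4 eta x y) (Dx4 psi x y) = - lor (eta x y) (Dx4 (Dx4 psi) x y).
Proof. intros H. pose proof (Dx_lor_const U HU eta (Dx4 psi) 0 x y sm_eta sm_px H f_epx). lra. Qed.
Lemma f_expy x y : U x y -> lor (Dx4 eta x y) (Dy4 psi x y) = - lor (eta x y) (Dx4 (Dy4 psi) x y).
Proof. intros H. pose proof (Dx_lor_const U HU eta (Dy4 psi) 0 x y sm_eta sm_py H f_epy). lra. Qed.
Lemma f_eypx' x y : U x y -> lor (Dy4 eta x y) (Dx4 psi x y) = - lor (eta x y) (Dy4 (Dx4 psi) x y).
Proof. intros H. pose proof (Dy_lor_const U HU eta (Dx4 psi) 0 x y sm_eta sm_px H f_epx). lra. Qed.
Lemma f_eypy x y : U x y -> lor (Dy4 eta x y) (Dy4 psi x y) = - lor (eta x y) (Dy4 (Dy4 psi) x y).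
Proof. intros H. pose proof (Dy_lor_const U HU eta (Dy4 psi) 0 x y sm_eta sm_py H f_epy). lra. Qed.

Lemma schwarz4 x y : U x y -> Dy4 (Dx4 psi) x y = Dx4 (Dy4 psi) x y.
Proof. intros H. destruct sm_psi as [S0 [S1 [S2 S3]]]. apply L4eq; simpl; symmetry;
  apply (sm_schwarz U HU); assumption. Qed.

Lemma f_eypx x y : U x y -> lor (Dy4 eta x y) (Dx4 psi x y) = - lor (eta x y) (Dx4 (Dy4 psi) x y).
Proof. intros H. rewrite f_eypx', schwarz4; auto. Qed.

Lemma f_exN x y : U x y -> lor (Dx4 eta x y) (vproj (psi x y)) = c3 (eta x y) * c3 (Dx4 psi x y).
Proof. intros H. pose proof (Dx_lor_const U HU eta (Nf psi) 0 x y sm_eta sm_N H f_eN) as E.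
  unfold Nf in E. rewrite (Dx4_vproj U HU), (lor_vproj_r (Dx4 psi x y)), f_epx in E; auto. lra. Qed.
Lemma f_eyN x y : U x y -> lor (Dy4 eta x y) (vproj (psi x y)) = c3 (eta x y) * c3 (Dy4 psi x y).
Proof. intros H. pose proof (Dy_lor_const U HU eta (Nf psi) 0 x y sm_eta sm_N H f_eN) as E.
  unfold Nf in E. rewrite (Dy4_vproj U HU), (lor_vproj_r (Dy4 psi x y)), f_epy in E; auto. lra. Qed.

Lemma f_H x y : U x y -> lor (eta x y) (Dx4 (Dx4 psi) x y) + lor (eta x y) (Dy4 (Dy4 psi) x y) = lam psi x y.
Proof. intros H. pose proof (HH x y H) as E. pose proof (lam_pos x y H). unfold mean_curv in E.
  rewrite lor_add_l in E. rewrite (lor_sym (Dx4 (Dx4 psi) x y)), (lor_sym (Dy4 (Dy4 psi) x y)) in E.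
  apply (Rmult_eq_compat_r (2 * lam psi x y)) in E. field_simplify in E; lra. Qed.

Lemma f_pxxN x y : U x y -> lor (Dx4 (Dx4 psi) x y) (vproj (psi x y)) = c3 (Dx4 psi x y) * c3 (Dx4 psi x y) - lam psi x y.
Proof. intros H. pose proof (Dx_lor_const U HU (Dx4 psi) (Nf psi) 0 x y sm_px sm_N H
   (fun a b Hab => eq_trans (lor_sym _ _) (f_Npx a b Hab))) as E.
  unfold Nf in E. rewrite (Dx4_vproj U HU), (lor_vproj_r (Dx4 psi x y) (Dx4 psi x y)) in E. unfold lam. lra. Qed.
Lemma f_pyyN x y : U x y -> lor (Dy4 (Dy4 psi) x y) (vproj (psi x y)) = c3 (Dy4 psi x y) * c3 (Dy4 psi x y) - lam psi x y.
Proof. intros H. pose proof (Dy_lor_const U HU (Dy4 psi) (Nf psi) 0 x y sm_py sm_N H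
   (fun a b Hab => eq_trans (lor_sym _ _) (f_Npy a b Hab))) as E.
  unfold Nf in E. rewrite (Dy4_vproj U HU), (lor_vproj_r (Dy4 psi x y) (Dy4 psi x y)) in E. rewrite f_pypy in E; auto. lra. Qed.

Lemma f_exxe x y : U x y -> lor (Dx4 (Dx4 eta) x y) (eta x y) = - lor (Dx4 eta x y) (Dx4 eta x y).
Proof. intros H. pose proof (Dx_lor_const U HU (Dx4 eta) eta 0 x y sm_ex sm_eta H f_exe) as E.
  lra. Qed.
Lemma f_eyye x y : U x y -> lor (Dy4 (Dy4 eta) x y) (eta x y) = - lor (Dy4 eta x y) (Dy4 eta x y).
Proof. intros H. pose proof (Dy_lor_const U HU (Dy4 eta) eta 0 x y sm_ey sm_eta H f_eye) as E.
  lra. Qed.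

Lemma sm_c3 F : smooth4 U F -> smooth U (comp3 F).
Proof. intros [_ [_ [_ H]]]. exact H. Qed.

Lemma f_exxN x y : U x y -> lor (Dx4 (Dx4 eta) x y) (vproj (psi x y)) + lor (Dx4 eta x y) (vproj (Dx4 psi x y))
   = c3 (Dx4 eta x y) * c3 (Dx4 psi x y) + c3 (eta x y) * c3 (Dx4 (Dx4 psi) x y).
Proof. intros H. pose proof (Dx_lor U HU (Dx4 eta) (Nf psi) x y sm_ex sm_N H) as E0.
  unfold Nf in E0. rewrite (Dx4_vproj U HU) in E0. rewrite <- E0.
  rewrite (Dx_ext U HU _ (fun a b => comp3 eta a b * comp3 (Dx4 psi) a b)); auto.
  - rewrite (Dx_mult U HU (comp3 eta) (comp3 (Dx4 psi)) x y (sm_c3 _ sm_eta) (sm_c3 _ sm_px) H).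
    reflexivity.
  - intros a b Hab. apply f_exN; auto.
Qed.
Lemma f_eyyN x y : U x y -> lor (Dy4 (Dy4 eta) x y) (vproj (psi x y)) + lor (Dy4 eta x y) (vproj (Dy4 psi x y))
   = c3 (Dy4 eta x y) * c3 (Dy4 psi x y) + c3 (eta x y) * c3 (Dy4 (Dy4 psi) x y).
Proof. intros H. pose proof (Dy_lor U HU (Dy4 eta) (Nf psi) x y sm_ey sm_N H) as E0.
  unfold Nf in E0. rewrite (Dy4_vproj U HU) in E0. rewrite <- E0.
  rewrite (Dy_ext U HU _ (fun a b => comp3 eta a b * comp3 (Dy4 psi) a b)); auto.
  - rewrite (Dy_mult U HU (comp3 eta) (comp3 (Dy4 psi)) x y (sm_c3 _ sm_eta) (sm_c3 _ sm_py) H).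
    reflexivity.
  - intros a b Hab. apply f_eyN; auto.
Qed.

Lemma f_Dpsi_px x y : U x y -> lor (Dx4 (Dx4 psi) x y) (Dx4 psi x y) + lor (Dy4 (Dy4 psi) x y) (Dx4 psi x y) = 0.
Proof. intros H.
  assert (E1 : Dx (fun a b => lor (Dy4 psi a b) (Dy4 psi a b)) x y = Dx (lam psi) x y).
  { apply (Dx_ext U HU); auto. intros a b Hab. apply f_pypy; auto. }
  rewrite (Dx_lor U HU (Dy4 psi) (Dy4 psi) x y sm_py sm_py H) in E1.
  unfold lam in E1. rewrite (Dx_lor U HU (Dx4 psi) (Dx4 psi) x y sm_px sm_px H) in E1.
  pose proof (Dy_lor_const U HU (Dx4 psi) (Dy4 psi) 0 x y sm_px sm_py H f_pxpy) as E2.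
  rewrite schwarz4 in E2; auto.
  rewrite (lor_sym (Dy4 psi x y) (Dx4 (Dy4 psi) x y)) in E1.
  rewrite (lor_sym (Dx4 psi x y) (Dx4 (Dx4 psi) x y)) in E1.
  rewrite (lor_sym (Dx4 psi x y) (Dy4 (Dy4 psi) x y)) in E2. lra. Qed.
Lemma f_Dpsi_py x y : U x y -> lor (Dx4 (Dx4 psi) x y) (Dy4 psi x y) + lor (Dy4 (Dy4 psi) x y) (Dy4 psi x y) = 0.
Proof. intros H.
  assert (E1 : Dy (fun a b => lor (Dy4 psi a b) (Dy4 psi a b)) x y = Dy (lam psi) x y).
  { apply (Dy_ext U HU); auto. intros a b Hab. apply f_pypy; auto. }
  rewrite (Dy_lor U HU (Dy4 psi) (Dy4 psi) x y sm_py sm_py H) in E1.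
  unfold lam in E1. rewrite (Dy_lor U HU (Dx4 psi) (Dx4 psi) x y sm_px sm_px H) in E1.
  pose proof (Dx_lor_const U HU (Dx4 psi) (Dy4 psi) 0 x y sm_px sm_py H f_pxpy) as E2.
  rewrite schwarz4 in E1; auto.
  rewrite (lor_sym (Dy4 psi x y) (Dy4 (Dy4 psi) x y)) in E1.
  rewrite (lor_sym (Dx4 psi x y) (Dx4 (Dy4 psi) x y)) in E1, E2. lra. Qed.


Lemma pars x y a b : U x y -> lor a b =
  lor a (Dx4 psi x y) * lor b (Dx4 psi x y) / lam psi x y + lor a (Dy4 psi x y) * lor b (Dy4 psi x y) / lam psi x y
  + lor a (eta x y) * lor b (eta x y) - lor a (vproj (psi x y)) * lor b (vproj (psi x y)).
Proof. intros H. apply parseval.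
  - apply Rgt_not_eq, lam_pos, H.
  - reflexivity.
  - apply f_pypy, H.
  - apply f_ee, H.
  - apply f_NN, H.
  - apply f_pxpy, H.
  - rewrite lor_sym; apply f_epx, H.
  - rewrite lor_sym; apply f_Npx, H.
  - rewrite lor_sym; apply f_epy, H.
  - rewrite lor_sym; apply f_Npy, H.
  - apply f_eN, H.
Qed.

Lemma lor_E3_l a : lor E3 a = c3 a. Proof. rewrite lor_sym; apply lor_E3. Qed.

Lemma v_exex x y : U x y -> lor (Dx4 eta x y) (Dx4 eta x y) =
  lor (eta x y) (Dx4 (Dx4 psi) x y) * lor (eta x y) (Dx4 (Dx4 psi) x y) / lam psi x y
  + lor (eta x y) (Dx4 (Dy4 psi) x y) * lor (eta x y) (Dx4 (Dy4 psi) x y) / lam psi x y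
  - (c3 (eta x y) * c3 (Dx4 psi x y)) * (c3 (eta x y) * c3 (Dx4 psi x y)).
Proof. intros H. rewrite (pars x y); auto. rewrite f_expx, f_expy, f_exe, f_exN; auto. field. apply Rgt_not_eq, lam_pos, H. Qed.
Lemma v_eyey x y : U x y -> lor (Dy4 eta x y) (Dy4 eta x y) =
  lor (eta x y) (Dx4 (Dy4 psi) x y) * lor (eta x y) (Dx4 (Dy4 psi) x y) / lam psi x y
  + lor (eta x y) (Dy4 (Dy4 psi) x y) * lor (eta x y) (Dy4 (Dy4 psi) x y) / lam psi x y
  - (c3 (eta x y) * c3 (Dy4 psi x y)) * (c3 (eta x y) * c3 (Dy4 psi x y)).
Proof. intros H. rewrite (pars x y); auto. rewrite f_eypx, f_eypy, f_eye, f_eyN; auto. field. apply Rgt_not_eq, lam_pos, H. Qed.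
Lemma v_exey x y : U x y -> lor (Dx4 eta x y) (Dy4 eta x y) =
  lor (eta x y) (Dx4 (Dx4 psi) x y) * lor (eta x y) (Dx4 (Dy4 psi) x y) / lam psi x y
  + lor (eta x y) (Dx4 (Dy4 psi) x y) * lor (eta x y) (Dy4 (Dy4 psi) x y) / lam psi x y
  - (c3 (eta x y) * c3 (Dx4 psi x y)) * (c3 (eta x y) * c3 (Dy4 psi x y)).
Proof. intros H. rewrite (pars x y); auto. rewrite f_expx, f_expy, f_exe, f_exN, f_eypx, f_eypy, f_eye, f_eyN; auto. field. apply Rgt_not_eq, lam_pos, H. Qed.
Lemma v_ux x y : U x y -> c3 (Dx4 eta x y) =
  - (lor (eta x y) (Dx4 (Dx4 psi) x y) * c3 (Dx4 psi x y) + lor (eta x y) (Dx4 (Dy4 psi) x y) * c3 (Dy4 psi x y)) / lam psi x y.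
Proof. intros H. rewrite <- lor_E3. rewrite (pars x y); auto. rewrite f_expx, f_expy, f_exe, f_exN; auto.
  rewrite !lor_E3_l. simpl. field. apply Rgt_not_eq, lam_pos, H. Qed.
Lemma v_uy x y : U x y -> c3 (Dy4 eta x y) =
  - (lor (eta x y) (Dx4 (Dy4 psi) x y) * c3 (Dx4 psi x y) + lor (eta x y) (Dy4 (Dy4 psi) x y) * c3 (Dy4 psi x y)) / lam psi x y.
Proof. intros H. rewrite <- lor_E3. rewrite (pars x y); auto. rewrite f_eypx, f_eypy, f_eye, f_eyN; auto.
  rewrite !lor_E3_l. simpl. field. apply Rgt_not_eq, lam_pos, H. Qed.
Lemma v_con x y : U x y -> lam psi x y * c3 (eta x y) ^ 2 = lam psi x y - c3 (Dx4 psi x y) ^ 2 - c3 (Dy4 psi x y) ^ 2.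
Proof. intros H. assert (E : lor E3 E3 = 1) by (unfold lor, E3; simpl; ring).
  rewrite (pars x y) in E; auto. rewrite !lor_E3_l, c3_vproj in E.
  pose proof (lam_pos x y H).
  assert (Eu : c3 (eta x y) * c3 (eta x y) = 1 - c3 (Dx4 psi x y) * c3 (Dx4 psi x y) / lam psi x y
     - c3 (Dy4 psi x y) * c3 (Dy4 psi x y) / lam psi x y) by lra.
  replace (c3 (eta x y) ^ 2) with (c3 (eta x y) * c3 (eta x y)) by ring. rewrite Eu. field. lra. Qed.
Lemma v_hsum x y : U x y -> c3 (Dx4 (Dx4 psi) x y) + c3 (Dy4 (Dy4 psi) x y) = lam psi x y * c3 (eta x y).
Proof. intros H. rewrite <- c3_add, <- lor_E3. rewrite (pars x y); auto. rewrite !lor_add_l.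
  rewrite (f_Dpsi_px x y H), (f_Dpsi_py x y H).
  rewrite (lor_sym (Dx4 (Dx4 psi) x y)), (lor_sym (Dy4 (Dy4 psi) x y)), (f_H x y H).
  rewrite !lor_E3_l, c3_vproj. field. apply Rgt_not_eq, lam_pos, H. Qed.

Lemma u_nz x y : U x y -> c3 (eta x y) <> 0.
Proof. intros H. apply Rgt_not_eq, u_pos, H. Qed.

Lemma sm_A : smooth U (Af eta).
Proof. apply (sm_ext U HU (fmult (fconst 2) (finv (fmult (comp3 eta) (comp3 eta))))).
  - intros a b H. unfold fmult, fconst, finv, Af, comp3. field. apply u_nz, H.
  - apply (sm_mult U HU). apply (sm_const U HU). apply (sm_inv U HU).
    + apply (sm_mult U HU); apply sm_c3, sm_eta.
    + intros a b H. unfold fmult, comp3. apply Rmult_integral_contrapositive_currified; apply u_nz, H.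
Qed.

Lemma dA_x x y : U x y -> Dx (Af eta) x y = -4 * c3 (Dx4 eta x y) / c3 (eta x y) ^ 3.
Proof. intros H. unfold Dx, Af. apply (der_A1 (fun t => c3 (eta t y))).
  - apply (sm_exdx U HU (comp3 eta)); auto. apply sm_c3, sm_eta.
  - apply u_nz, H. Qed.
Lemma dA_y x y : U x y -> Dy (Af eta) x y = -4 * c3 (Dy4 eta x y) / c3 (eta x y) ^ 3.
Proof. intros H. unfold Dy, Af. apply (der_A1 (fun t => c3 (eta x t))).
  - apply (sm_exdy U HU (comp3 eta)); auto. apply sm_c3, sm_eta.
  - apply u_nz, H. Qed.
Lemma ddA_x x y : U x y -> Dx (Dx (Af eta)) x y =
  -4 * c3 (Dx4 (Dx4 eta) x y) / c3 (eta x y) ^ 3 + 12 * c3 (Dx4 eta x y) * c3 (Dx4 eta x y) / c3 (eta x y) ^ 4.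
Proof. intros H. rewrite (Dx_ext U HU (Dx (Af eta)) (fun a b => -4 * c3 (Dx4 eta a b) / c3 (eta a b) ^ 3)); auto.
  2: { intros a b Hab. apply dA_x, Hab. }
  unfold Dx at 1. apply (der_A2 (fun t => c3 (eta t y)) (fun t => c3 (Dx4 eta t y))).
  - apply (sm_exdx U HU (comp3 eta)); auto. apply sm_c3, sm_eta.
  - apply (sm_exdx U HU (comp3 (Dx4 eta))); auto. apply sm_c3, sm_ex.
  - apply u_nz, H. Qed.
Lemma ddA_y x y : U x y -> Dy (Dy (Af eta)) x y =
  -4 * c3 (Dy4 (Dy4 eta) x y) / c3 (eta x y) ^ 3 + 12 * c3 (Dy4 eta x y) * c3 (Dy4 eta x y) / c3 (eta x y) ^ 4.
Proof. intros H. rewrite (Dy_ext U HU (Dy (Af eta)) (fun a b => -4 * c3 (Dy4 eta a b) / c3 (eta a b) ^ 3)); auto.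
  2: { intros a b Hab. apply dA_y, Hab. }
  unfold Dy at 1. apply (der_A2 (fun t => c3 (eta x t)) (fun t => c3 (Dy4 eta x t))).
  - apply (sm_exdy U HU (comp3 eta)); auto. apply sm_c3, sm_eta.
  - apply (sm_exdy U HU (comp3 (Dy4 eta))); auto. apply sm_c3, sm_ey.
  - apply u_nz, H. Qed.

Lemma sm_sharp : smooth4 U (psi_sharp psi eta).
Proof. rewrite psi_sharp_eq. apply (sm4_add U HU).
  - apply (sm4_opp U HU), sm_psi.
  - apply (sm4_scal U HU); [apply sm_A|]. apply (sm4_add U HU); [apply sm_eta|apply sm_N]. Qed.

Lemma Dsx x y : U x y -> Dx4 (psi_sharp psi eta) x y =
  add4 (opp4 (Dx4 psi x y)) (add4 (scal4 (-4 * c3 (Dx4 eta x y) / c3 (eta x y) ^ 3) (add4 (eta x y) (Nf psi x y)))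
     (scal4 (Af eta x y) (add4 (Dx4 eta x y) (vproj (Dx4 psi x y))))).
Proof. intros H. rewrite psi_sharp_eq. rewrite (D1x U HU); auto using sm_psi, sm_eta, sm_N, sm_A.
  rewrite dA_x; auto. unfold Nf. rewrite (Dx4_vproj U HU). reflexivity. Qed.
Lemma Dsy x y : U x y -> Dy4 (psi_sharp psi eta) x y =
  add4 (opp4 (Dy4 psi x y)) (add4 (scal4 (-4 * c3 (Dy4 eta x y) / c3 (eta x y) ^ 3) (add4 (eta x y) (Nf psi x y)))
     (scal4 (Af eta x y) (add4 (Dy4 eta x y) (vproj (Dy4 psi x y))))).
Proof. intros H. rewrite psi_sharp_eq. rewrite (D1y U HU); auto using sm_psi, sm_eta, sm_N, sm_A.
  rewrite dA_y; auto. unfold Nf. rewrite (Dy4_vproj U HU). reflexivity. Qed.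

Ltac symfacts := repeat match goal with
  | Hf : lor ?a ?b = ?v |- context [lor ?b ?a] => 
      match a with b => fail 1 | _ => rewrite (lor_sym b a), Hf end
  | Hf : lor ?a ?b = ?v |- context [lor ?a ?b] => rewrite Hf
  end.

Ltac facts1 x y H :=
  pose proof (f_pxpx x y) as F1; pose proof (f_pypy x y H) as F2; pose proof (f_pxpy x y H) as F3;
  pose proof (f_ee x y H) as F4; pose proof (f_eN x y H) as F5; pose proof (f_epx x y H) as F6;
  pose proof (f_epy x y H) as F7; pose proof (f_NN x y H) as F8; pose proof (f_Npx x y H) as F9;
  pose proof (f_Npy x y H) as F10; pose proof (f_exe x y H) as F11; pose proof (f_eye x y H) as F12;
  pose proof (f_expx x y H) as F13; pose proof (f_expy x y H) as F14; pose proof (f_eypx x y H) as F15;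
  pose proof (f_eypy x y H) as F16; pose proof (f_exN x y H) as F17; pose proof (f_eyN x y H) as F18;
  pose proof (v_exex x y H) as F19; pose proof (v_eyey x y H) as F20; pose proof (v_exey x y H) as F21;
  change (vproj (psi x y)) with (Nf psi x y) in *;
  pose proof (c3_vproj (psi x y)) as C1; change (vproj (psi x y)) with (Nf psi x y) in C1;
  pose proof (v_ux x y H) as C2; pose proof (v_uy x y H) as C3.

Ltac close_pure lam u hx hy Hl Hu Hcon :=
  let Hz := fresh "Hz" in
  destruct (Req_dec (hx^2+hy^2) 0) as [Hz|Hz];
  [ assert (hx = 0) by nra; assert (hy = 0) by nra; subst hx hy;
    assert (u^2 = 1) by (apply (Rmult_eq_reg_l lam); [nra|lra]);
    assert (u = 1) by nra; subst u; field; lra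
  | let Hsum := fresh "Hsum" in
    assert (Hsum : hx^2+hy^2 = lam*(1-u^2)) by nra;
    assert (1 - u^2 <> 0) by (intro; apply Hz; rewrite Hsum; nra);
    let Hl2 := fresh "Hl2" in
    assert (Hl2 : lam = (hx^2+hy^2)/(1-u^2)) by (rewrite Hsum; field; auto);
    subst lam; field; repeat split; try lra; try nra ].

Ltac close_all x y H :=
  let EP := fresh "EP" in
  assert (EP : lor (eta x y) (Dy4 (Dy4 psi) x y) = lam psi x y - lor (eta x y) (Dx4 (Dx4 psi) x y))
    by (pose proof (f_H x y H); lra);
  rewrite ?EP;
  pose proof (lam_pos x y H) as Hl; pose proof (u_pos x y H) as Hu; pose proof (v_con x y H) as Hcon;
  set (lL := lor (eta x y) (Dx4 (Dx4 psi) x y)) in *;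
  set (lM := lor (eta x y) (Dx4 (Dy4 psi) x y)) in *;
  set (lhx := c3 (Dx4 psi x y)) in *; set (lhy := c3 (Dy4 psi x y)) in *;
  set (lu := c3 (eta x y)) in *;
  change (lam psi x y) with (lor (Dx4 psi x y) (Dx4 psi x y)) in *;
  set (llam := lor (Dx4 psi x y) (Dx4 psi x y)) in *;
  clearbody lL lM lhx lhy lu llam; clear - Hl Hu Hcon;
  close_pure llam lu lhx lhy Hl Hu Hcon.

Lemma test_conf x y : U x y -> lor (Dx4 (psi_sharp psi eta) x y) (Dy4 (psi_sharp psi eta) x y) = 0.
Proof. intros H. rewrite (Dsx x y H), (Dsy x y H). facts1 x y H.
  unfold opp4, Af. autorewrite with lorE. symfacts. rewrite ?C1, ?C2, ?C3.
  close_all x y H.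
Qed.

Ltac sharp_prep x y H :=
  unfold lam_sharp, angle, comp3; rewrite Cmod2, ARQ_fst, ARQ_snd, lorz_fst, lorz_snd, (HH x y H).

Lemma sharp_xx x y : U x y -> lor (Dx4 (psi_sharp psi eta) x y) (Dx4 (psi_sharp psi eta) x y) = lam_sharp psi eta x y.
Proof. intros H. sharp_prep x y H. rewrite (Dsx x y H). facts1 x y H.
  unfold opp4, Af. autorewrite with lorE. symfacts. rewrite ?C1, ?C2, ?C3.
  close_all x y H. Qed.
Lemma sharp_yy x y : U x y -> lor (Dy4 (psi_sharp psi eta) x y) (Dy4 (psi_sharp psi eta) x y) = lam_sharp psi eta x y.
Proof. intros H. sharp_prep x y H. rewrite (Dsy x y H). facts1 x y H.
  unfold opp4, Af. autorewrite with lorE. symfacts. rewrite ?C1, ?C2, ?C3.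
  close_all x y H. Qed.

Lemma H2_sharp x y : U x y -> in_H2xR (psi_sharp psi eta x y).
Proof. intros H. pose proof (u_pos x y H) as Hu. split.
  - transitivity (lor (vproj (psi_sharp psi eta x y)) (vproj (psi_sharp psi eta x y))).
    + unfold lor; simpl; ring.
    + rewrite psi_sharp_eq. unfold opp4, Af. rewrite ?vproj_add, ?vproj_scal, ?vproj_Nf.
      facts1 x y H. rewrite ?vproj_Nf. autorewrite with lorE. symfacts. rewrite ?C1.
      field. lra.
  - destruct (proj2 Hc x y H) as [[HN0 HN] _].
    pose proof (f_eN x y H) as E1. pose proof (f_ee x y H) as E2.
    pose proof (v_con x y H) as Hcon. pose proof (lam_pos x y H) as Hl.
    unfold lor in E1, E2. simpl in E1, E2. simpl.
    unfold angle, comp3.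
    apply (pos_lemma (c0 (psi x y)) (c1 (psi x y)) (c2 (psi x y)) (c0 (eta x y)) (c1 (eta x y)) (c2 (eta x y))); auto.
    + lra.
    + lra.
    + nra.
Qed.

Lemma lam_sharp_pos x y : U x y -> 0 < lam_sharp psi eta x y.
Proof. intros H. unfold lam_sharp, angle, comp3. pose proof (u_pos x y H). pose proof (lam_pos x y H).
  assert (0 < Cmod (ARQ psi eta x y)) by (apply Cmod_gt_0; apply HQ; auto).
  apply Rdiv_lt_0_compat; [|apply Rmult_lt_0_compat; [auto|apply pow_lt; auto]].
  apply Rmult_lt_0_compat; [lra|apply pow_lt; auto]. Qed.

Lemma vsharp_eq x y : vproj (psi_sharp psi eta x y) =
  add4 (opp4 (Nf psi x y)) (scal4 (Af eta x y) (add4 (vproj (eta x y)) (Nf psi x y))).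
Proof. apply L4eq; unfold Nf, Af, opp4, psi_sharp, angle, comp3; simpl; ring. Qed.
Lemma eta_s_eq x y : eta_s psi eta x y =
  add4 (eta x y) (add4 (Nf psi x y) (opp4 (add4 (opp4 (Nf psi x y)) (scal4 (Af eta x y) (add4 (vproj (eta x y)) (Nf psi x y)))))).
Proof. unfold eta_s. rewrite vsharp_eq. reflexivity. Qed.

Lemma es_unit x y : U x y -> lor (eta_s psi eta x y) (eta_s psi eta x y) = 1.
Proof. intros H. rewrite eta_s_eq. facts1 x y H. unfold opp4, Af. autorewrite with lorE. symfacts.
  rewrite ?C1, ?C2, ?C3. close_all x y H. Qed.
Lemma es_N x y : U x y -> lor (eta_s psi eta x y) (vproj (psi_sharp psi eta x y)) = 0.
Proof. intros H. rewrite eta_s_eq, vsharp_eq. facts1 x y H. unfold opp4, Af. autorewrite with lorE. symfacts.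
  rewrite ?C1, ?C2, ?C3. close_all x y H. Qed.
Lemma es_x x y : U x y -> lor (eta_s psi eta x y) (Dx4 (psi_sharp psi eta) x y) = 0.
Proof. intros H. rewrite eta_s_eq, (Dsx x y H). facts1 x y H. unfold opp4, Af. autorewrite with lorE. symfacts.
  rewrite ?C1, ?C2, ?C3. close_all x y H. Qed.
Lemma es_y x y : U x y -> lor (eta_s psi eta x y) (Dy4 (psi_sharp psi eta) x y) = 0.
Proof. intros H. rewrite eta_s_eq, (Dsy x y H). facts1 x y H. unfold opp4, Af. autorewrite with lorE. symfacts.
  rewrite ?C1, ?C2, ?C3. close_all x y H. Qed.
Lemma es_angle x y : angle (eta_s psi eta) x y = angle eta x y.
Proof. unfold angle, comp3, eta_s, Nf, psi_sharp, opp4; simpl. ring. Qed.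
Lemma es_gauss x y : hypGauss (psi_sharp psi eta) (eta_s psi eta) x y = hypGauss psi eta x y.
Proof. unfold hypGauss. rewrite es_angle. f_equal. apply L4eq; unfold eta_s, Nf, opp4, psi_sharp, angle, comp3; simpl; ring. Qed.

Lemma DDNx x y : U x y -> Dx4 (Dx4 (Nf psi)) x y = vproj (Dx4 (Dx4 psi) x y).
Proof. intros H. rewrite (Dx4_ext U HU (Dx4 (Nf psi)) (fun a b => vproj (Dx4 psi a b))); auto.
  - apply (Dx4_vproj U HU).
  - intros a b _. apply (Dx4_vproj U HU). Qed.
Lemma DDNy x y : U x y -> Dy4 (Dy4 (Nf psi)) x y = vproj (Dy4 (Dy4 psi) x y).
Proof. intros H. rewrite (Dy4_ext U HU (Dy4 (Nf psi)) (fun a b => vproj (Dy4 psi a b))); auto.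
  - apply (Dy4_vproj U HU).
  - intros a b _. apply (Dy4_vproj U HU). Qed.

Lemma D2xs x y : U x y -> Dx4 (Dx4 (psi_sharp psi eta)) x y =
  add4 (opp4 (Dx4 (Dx4 psi) x y))
   (add4 (add4 (scal4 (-4 * c3 (Dx4 (Dx4 eta) x y) / c3 (eta x y) ^ 3 + 12 * c3 (Dx4 eta x y) * c3 (Dx4 eta x y) / c3 (eta x y) ^ 4) (add4 (eta x y) (Nf psi x y)))
               (scal4 (-4 * c3 (Dx4 eta x y) / c3 (eta x y) ^ 3) (add4 (Dx4 eta x y) (vproj (Dx4 psi x y)))))
         (add4 (scal4 (-4 * c3 (Dx4 eta x y) / c3 (eta x y) ^ 3) (add4 (Dx4 eta x y) (vproj (Dx4 psi x y))))
               (scal4 (Af eta x y) (add4 (Dx4 (Dx4 eta) x y) (vproj (Dx4 (Dx4 psi) x y)))))).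
Proof. intros H. rewrite psi_sharp_eq. rewrite (D2x U HU); auto using sm_psi, sm_eta, sm_N, sm_A.
  rewrite (ddA_x x y H), (dA_x x y H), (DDNx x y H). unfold Nf. rewrite !(Dx4_vproj U HU). reflexivity. Qed.
Lemma D2ys x y : U x y -> Dy4 (Dy4 (psi_sharp psi eta)) x y =
  add4 (opp4 (Dy4 (Dy4 psi) x y))
   (add4 (add4 (scal4 (-4 * c3 (Dy4 (Dy4 eta) x y) / c3 (eta x y) ^ 3 + 12 * c3 (Dy4 eta x y) * c3 (Dy4 eta x y) / c3 (eta x y) ^ 4) (add4 (eta x y) (Nf psi x y)))
               (scal4 (-4 * c3 (Dy4 eta x y) / c3 (eta x y) ^ 3) (add4 (Dy4 eta x y) (vproj (Dy4 psi x y)))))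
         (add4 (scal4 (-4 * c3 (Dy4 eta x y) / c3 (eta x y) ^ 3) (add4 (Dy4 eta x y) (vproj (Dy4 psi x y))))
               (scal4 (Af eta x y) (add4 (Dy4 (Dy4 eta) x y) (vproj (Dy4 (Dy4 psi) x y)))))).
Proof. intros H. rewrite psi_sharp_eq. rewrite (D2y U HU); auto using sm_psi, sm_eta, sm_N, sm_A.
  rewrite (ddA_y x y H), (dA_y x y H), (DDNy x y H). unfold Nf. rewrite !(Dy4_vproj U HU). reflexivity. Qed.

Lemma mc_num x y : U x y ->
  lor (add4 (Dx4 (Dx4 (psi_sharp psi eta)) x y) (Dy4 (Dy4 (psi_sharp psi eta)) x y)) (eta_s psi eta x y)
  = lam_sharp psi eta x y.
Proof. intros H. sharp_prep x y H. rewrite (D2xs x y H), (D2ys x y H), eta_s_eq.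
  pose proof (f_pxxN x y H) as G1; pose proof (f_pyyN x y H) as G2;
  pose proof (f_exxe x y H) as G3; pose proof (f_eyye x y H) as G4;
  pose proof (f_exxN x y H) as G5; pose proof (f_eyyN x y H) as G6.
  rewrite (lor_vproj_r (Dx4 psi x y)) in G5. rewrite (lor_vproj_r (Dy4 psi x y)) in G6.
  assert (G5' : lor (Dx4 (Dx4 eta) x y) (vproj (psi x y)) = c3 (Dx4 eta x y) * c3 (Dx4 psi x y) +
     c3 (eta x y) * c3 (Dx4 (Dx4 psi) x y) - (lor (Dx4 eta x y) (Dx4 psi x y) - c3 (Dx4 eta x y) * c3 (Dx4 psi x y))) by lra.
  assert (G6' : lor (Dy4 (Dy4 eta) x y) (vproj (psi x y)) = c3 (Dy4 eta x y) * c3 (Dy4 psi x y) +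
     c3 (eta x y) * c3 (Dy4 (Dy4 psi) x y) - (lor (Dy4 eta x y) (Dy4 psi x y) - c3 (Dy4 eta x y) * c3 (Dy4 psi x y))) by lra.
  clear G5 G6.
  pose proof (v_hsum x y H) as EH.
  assert (EH' : c3 (Dy4 (Dy4 psi) x y) = lam psi x y * c3 (eta x y) - c3 (Dx4 (Dx4 psi) x y)) by lra.
  clear EH.
  facts1 x y H. unfold opp4, Af. autorewrite with lorE.
  rewrite ?(lor_sym (Dx4 (Dx4 psi) x y) (eta x y)), ?(lor_sym (Dy4 (Dy4 psi) x y) (eta x y)).
  symfacts. rewrite ?C1, ?C2, ?C3, ?EH'.
  close_all x y H. Qed.

Lemma main_all :
  (forall x y, U x y ->
     psi_sharp psi eta x y
     = add4 (opp4 (psi x y)) (scal4 (2 / angle eta x y) (hypGauss psi eta x y))) /\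
  conformal_immersion U (psi_sharp psi eta) /\
  (forall x y, U x y -> lam (psi_sharp psi eta) x y = lam_sharp psi eta x y) /\
  exists eta_s : vmap,
    canonical_normal U (psi_sharp psi eta) eta_s /\
    (forall x y, U x y ->
       mean_curv (psi_sharp psi eta) eta_s x y = 1 / 2 /\
       angle eta_s x y = angle eta x y /\
       hypGauss (psi_sharp psi eta) eta_s x y = hypGauss psi eta x y).
Proof.
  split; [|split; [|split]].
  - intros x y H. pose proof (u_nz x y H). apply L4eq; unfold psi_sharp, hypGauss, opp4, angle, comp3; simpl; field; auto.
  - split; [apply sm_sharp|]. intros x y H. split; [apply H2_sharp, H|]. split; [|split].
    + unfold lam. rewrite (sharp_xx x y H). apply lam_sharp_pos, H.
    + unfold lam. rewrite (sharp_xx x y H). apply sharp_yy, H.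
    + apply test_conf, H.
  - intros x y H. apply sharp_xx, H.
  - exists (eta_s psi eta). split.
    + split; [split|].
      * unfold eta_s. apply (sm4_add U HU); [apply sm_eta|]. apply (sm4_add U HU); [apply sm_N|].
        apply (sm4_opp U HU), (sm4_vproj U HU), sm_sharp.
      * intros x y H. split; [apply es_unit, H|]. split; [apply es_N, H|]. split; [apply es_x, H|apply es_y, H].
      * intros x y H. rewrite es_angle. apply u_pos, H.
    + intros x y H. split; [|split; [apply es_angle|apply es_gauss]].
      unfold mean_curv. rewrite (mc_num x y H). unfold lam. rewrite (sharp_xx x y H).
      pose proof (lam_sharp_pos x y H). field. lra.
Qed.
End Geo.

Theorem mainTheorem11 (U : sdom) (psi eta : vmap) :
  open_dom U ->
  conformal_immersion U psi ->
  canonical_normal U psi eta ->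
  (forall x y, U x y -> mean_curv psi eta x y = 1 / 2) ->
  (forall x y, U x y -> ARQ psi eta x y <> RtoC 0) ->
  (forall x y, U x y ->
     psi_sharp psi eta x y
     = add4 (opp4 (psi x y)) (scal4 (2 / angle eta x y) (hypGauss psi eta x y))) /\
  conformal_immersion U (psi_sharp psi eta) /\
  (forall x y, U x y -> lam (psi_sharp psi eta) x y = lam_sharp psi eta x y) /\
  exists eta_s : vmap,
    canonical_normal U (psi_sharp psi eta) eta_s /\
    (forall x y, U x y ->
       mean_curv (psi_sharp psi eta) eta_s x y = 1 / 2 /\
       angle eta_s x y = angle eta x y /\
       hypGauss (psi_sharp psi eta) eta_s x y = hypGauss psi eta x y).
Proof. intros HU Hc Hn HH HQ. exact (main_all U psi eta HU Hc Hn HH HQ). Qed.
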